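(* For every integer $n \geq 8$, $h(n,5) \leq \frac{7n + c(n \bmod 6)}{6}$, where $c(0)=0$, $c(1)=35$, $c(2)=16$, $c(3)=27$, $c(4)=8$, $c(5)=28$.
   Context: All graphs are finite and simple. A degree monotone path in a graph $G$ is a path $v_1v_2\ldots v_m$ such that $\deg(v_1)\le \cdots\le \deg(v_m)$ or $\deg(v_1)\ge \cdots\ge \deg(v_m)$; its length is its number of vertices. $mp(G)$ denotes the maximum length of a degree monotone path in $G$. For a pair $e$ of non-adjacent vertices, $G+e$ is $G$ with the edge $e$ added. A graph $G$ is $k$-saturated if $mp(G)\le k-1$ and $mp(G+e)\ge k$ for every pair $e$ of non-adjacent vertices of $G$ (so $K_m$ is $k$-saturated for $m\le k-1$). $h(n,k)$ is the minimum number of edges of a $k$-saturated graph on $n$ vertices. *)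

(* Defs.v *)
From mathcomp Require Import all_boot.
Set Implicit Arguments. Unset Strict Implicit. Unset Printing Implicit Defensive.

Section Graphs.
Variable T : finType.

Definition simple_graph (g : rel T) : Prop := symmetric g /\ irreflexive g.

Definition deg (g : rel T) (x : T) : nat := #|[set y | g x y]|.

Definition edges (g : rel T) : {set {set T}} :=
  [set [set p.1; p.2] | p in [set p : T * T | g p.1 p.2]].

Definition dm_path (g : rel T) (s : seq T) : bool :=
  [&& uniq s,
      (if s is x :: s' then path g x s' else true) &
      (sorted leq (map (deg g) s) || sorted geq (map (deg g) s))].

Definition mp (g : rel T) : nat :=
  \max_(m < #|T|.+1 | [exists t : m.-tuple T, dm_path g t]) m.

Definition add_edge (g : rel T) (x y : T) : rel T :=
  fun a b => [|| g a b, (a == x) && (b == y) | (a == y) && (b == x)].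

Definition saturated (k : nat) (g : rel T) : Prop :=
  mp g <= k.-1 /\
  forall x y : T, x != y -> ~~ g x y -> k <= mp (add_edge g x y).

End Graphs.

Definition c_const (r : nat) : nat :=
  match r with
  | 0 => 0 | 1 => 35 | 2 => 16 | 3 => 27 | 4 => 8 | _ => 28
  end.

(* Main.v *)
Require Import Defs.
From mathcomp Require Import all_boot zify.
From Stdlib Require Import FunctionalExtensionality.
Set Implicit Arguments. Unset Strict Implicit. Unset Printing Implicit Defensive.

Section Gen.
Variable T : finType.
Implicit Types (g : rel T) (s : seq T).

Lemma dm_path_size g s : dm_path g s -> size s <= mp g.
Proof.
move=> H; have /and3P [Hu _ _] := H.
have Hs : size s < #|T|.+1 by rewrite ltnS -(card_uniqP Hu) max_card.
rewrite /mp.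
apply: (@leq_bigmax_cond _ _ _ (Ordinal Hs)) => /=.
by apply/existsP; exists (in_tuple s).
Qed.

Lemma mp_le g k : (forall s, dm_path g s -> size s <= k) -> mp g <= k.
Proof.
move=> H; apply/bigmax_leqP => i /existsP [t Ht].
by rewrite -(size_tuple t); apply: H.
Qed.

Lemma sat_of g :
  (forall s, dm_path g s -> size s <= 4) ->
  (forall x y, x != y -> ~~ g x y ->
     exists s, dm_path (add_edge g x y) s /\ 5 <= size s) ->
  saturated 5 g.
Proof.
move=> H1 H2; split; first exact: mp_le.
move=> x y Hxy Hg; have [s [Hs Hz]] := H2 x y Hxy Hg.
exact: leq_trans Hz (dm_path_size Hs).
Qed.
End Gen.

Section Emb.
Variables T0 T : finType.
Variables (g0 : rel T0) (g : rel T) (phi : T0 -> T).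
Hypothesis Hinj : injective phi.
Hypothesis Hadj : forall a b, g (phi a) (phi b) = g0 a b.
Hypothesis Hcl : forall a v, g (phi a) v -> exists b, v = phi b.

Lemma emb_deg a : deg g (phi a) = deg g0 a.
Proof.
rewrite /deg; have -> : [set v | g (phi a) v] = phi @: [set b | g0 a b].
  apply/setP => v; rewrite inE; apply/idP/imsetP.
    by move=> /[dup] /Hcl [b ->]; rewrite Hadj => Hb; exists b; rewrite ?inE.
  by move=> [b]; rewrite inE => Hb ->; rewrite Hadj.
by rewrite card_imset.
Qed.

Lemma emb_dm s : dm_path g (map phi s) = dm_path g0 s.
Proof.
rewrite /dm_path (map_inj_uniq Hinj) -!map_comp (eq_map emb_deg).
congr [&& _, _ & _]; case: s => //= a s; rewrite path_map.
by apply: eq_path => u v /=; rewrite Hadj.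
Qed.

Lemma emb_path s a : path g (phi a) s -> exists s0, s = map phi s0.
Proof.
elim: s a => [|v s IH] a /=; first by exists [::].
move=> /andP [/Hcl [b ->] /IH [s0 ->]]; by exists (b :: s0).
Qed.

Lemma emb_add x y : forall a b, add_edge g (phi x) (phi y) (phi a) (phi b) = add_edge g0 x y a b.
Proof. by move=> a b; rewrite /add_edge Hadj !(inj_eq Hinj). Qed.

Lemma emb_add_cl x y : forall a v, add_edge g (phi x) (phi y) (phi a) v -> exists b, v = phi b.
Proof.
move=> a v; rewrite /add_edge => /or3P [/Hcl //|/andP [_ /eqP ->]|/andP [_ /eqP ->]];
  by eexists.
Qed.
End Emb.

Definition Gf (n : nat) (f : rel nat) : rel 'I_n := fun a b => f a b.
Arguments Gf : clear implicits.
Definition addE (f : rel nat) (x y : nat) : rel nat :=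
  fun a b => [|| f a b, (a == x) && (b == y) | (a == y) && (b == x)].
Definition degN (f : rel nat) n v := count (f v) (iota 0 n).
Definition dmN (f : rel nat) n (t : seq nat) : bool :=
  [&& uniq t, (if t is x :: t' then path f x t' else true) &
      (sorted leq (map (degN f n) t) || sorted geq (map (degN f n) t))].

Lemma card_nat (p : pred nat) n : #|[set b : 'I_n | p b]| = count p (iota 0 n).
Proof.
rewrite -sum1_card (eq_bigl (fun b : 'I_n => p b)); last by move=> b; rewrite inE.
by rewrite -(big_mkord p (fun _ => 1)) sum1_count /index_iota subn0.
Qed.

Lemma deg_Gf n f (a : 'I_n) : deg (Gf n f) a = degN f n a.
Proof. by rewrite /deg card_nat. Qed.

Lemma add_Gf n f (x y : 'I_n) : add_edge (Gf n f) x y = Gf n (addE f x y).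
Proof. by do 2 apply: functional_extensionality => ?. Qed.

Lemma dm_Gf n f (s : seq 'I_n) : dm_path (Gf n f) s = dmN f n (map val s).
Proof.
rewrite /dm_path /dmN (map_inj_uniq val_inj) -!map_comp.
rewrite (eq_map (@deg_Gf n f)).
congr [&& _, _ & _]; case: s => //= a s; by rewrite path_map.
Qed.

Lemma lift_seq n (t : seq nat) : all (fun v => v < n) t -> exists s : seq 'I_n, map val s = t.
Proof.
elim: t => [|v t IH] /=; first by exists [::].
move=> /andP [Hv /IH [s Hs]]; by exists (Ordinal Hv :: s); rewrite /= Hs.
Qed.

Definition nb (f : rel nat) n v := filter (f v) (iota 0 n).

Definition chk1 (f : rel nat) n :=
  all (fun a => all (fun b => all (fun c => all (fun d => all (fun e =>
    ~~ dmN f n [:: a; b; c; d; e]) (nb f n d)) (nb f n c)) (nb f n b)) (nb f n a)) (iota 0 n).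

Definition okw (h : rel nat) n (t : seq nat) := [&& 4 < size t, all (fun v => v < n) t & dmN h n t].

Definition chk2 (f : rel nat) n (W : seq (seq (seq nat))) :=
  all (fun x => all (fun y => (x == y) || f x y ||
     okw (addE f x y) n (nth [::] (nth [::] W x) y)) (iota 0 n)) (iota 0 n).

Definition mktbl (f : rel nat) n := [seq [seq f a b | b <- iota 0 n] | a <- iota 0 n].
Definition tf (T : seq (seq bool)) : rel nat := fun a b => nth false (nth [::] T a) b.

Lemma Gf_tbl n f : Gf n (tf (mktbl f n)) = Gf n f.
Proof.
apply: functional_extensionality => a; apply: functional_extensionality => b.
rewrite /Gf /tf /mktbl (nth_map 0) ?size_iota // nth_iota // (nth_map 0) ?size_iota //.
by rewrite nth_iota.
Qed.

Lemma dmN_prefix f n t1 t2 : dmN f n (t1 ++ t2) -> dmN f n t1.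
Proof.
rewrite /dmN cat_uniq map_cat => /and3P [/andP [-> _] Hp Hs] /=; apply/andP; split.
  by move: Hp; case: t1 Hs => [|x t1'] _ //=; rewrite cat_path => /andP [].
case/orP: Hs => Hs; apply/orP; [left|right];
  apply: subseq_sorted (prefix_subseq _ _) Hs => //.
  exact: leq_trans.
by move=> a b c /= H1 H2; apply: leq_trans H2 H1.
Qed.

Lemma chk1_ok f n : chk1 f n -> forall s : seq 'I_n, dm_path (Gf n f) s -> size s <= 4.
Proof.
move=> H s; rewrite dm_Gf -(size_map val).
have : all (fun v => v < n) (map val s) by apply/allP => v /mapP [i _ ->]; exact: ltn_ord.
move: (map val s) => t Hall Hd; rewrite leqNgt; apply/negP => Hsz.
case: t Hsz Hall Hd => [|a [|b [|c [|d [|e t]]]]] // _ /=.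
move=> /andP [Ha /andP [Hb /andP [Hc /andP [Hd /andP [He _]]]]] Hdm.
have Hdm5 := dmN_prefix (t1 := [:: a; b; c; d; e]) Hdm.
have := Hdm5; rewrite /dmN /= => /and3P [_ /and4P [Hab Hbc Hcd /andP [Hde _]] _].
have mem v w : v < n -> f w v -> v \in nb f n w by move=> Hv Hf; rewrite mem_filter Hf mem_iota.
move/allP: H => /(_ a); rewrite mem_iota Ha => /(_ isT) /allP /(_ b (mem _ _ Hb Hab)).
move=> /allP /(_ c (mem _ _ Hc Hbc)) /allP /(_ d (mem _ _ Hd Hcd)) /allP /(_ e (mem _ _ He Hde)).
by rewrite Hdm5.
Qed.

Lemma chk2_ok f n W : chk2 f n W -> forall x y : 'I_n, x != y -> ~~ Gf n f x y ->
  exists s, dm_path (add_edge (Gf n f) x y) s /\ 5 <= size s.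
Proof.
move=> H x y Hxy Hf; move/allP: H => /(_ x); rewrite mem_iota ltn_ord => /(_ isT).
move=> /allP /(_ y); rewrite mem_iota ltn_ord => /(_ isT).
have Hxy' : (val x == val y) = false by apply/negbTE.
rewrite Hxy' (negbTE (Hf : ~~ f x y)) /= /okw => /and3P [Hsz Hall Hdm].
have [s Hs] := lift_seq Hall; exists s.
by rewrite add_Gf dm_Gf Hs -(size_map val) Hs.
Qed.

Definition er r := nth 0 [:: 0; 13; 8; 9; 4; 5] r.
Definition k4 r := nth 0 [:: 0; 2; 2; 1; 1; 0] r.
Definition blk r a := if a < er r then 0 else ((a - er r) %/ 6).+1.
Definition loc r a := if a < er r then a else (a - er r) %% 6.
Definition xcomp r i := if i < 4 * k4 r then i %/ 4 else k4 r.
Definition xadj r i j := [&& i != j, xcomp r i == xcomp r j &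
  ~~ (odd r && ((i == er r - 2) && (j == er r - 1) || (i == er r - 1) && (j == er r - 2)))].
Definition hE i j := (i, j) \in [:: (0,1); (0,2); (0,3); (1,4); (1,5); (2,4); (3,5)].
Definition hadj i j := (i != j) && (hE i j || hE j i).
Definition gadjr r a b := (blk r a == blk r b) &&
  (if blk r a == 0 then xadj r (loc r a) (loc r b) else hadj (loc r a) (loc r b)).
Definition G n := Gf n (gadjr (n %% 6)).
Arguments G : clear implicits.

Definition PP1 (T : finType) (g : rel T) := forall s, dm_path g s -> size s <= 4.
Definition PP2 (T : finType) (g : rel T) := forall x y, x != y -> ~~ g x y ->
  exists s, dm_path (add_edge g x y) s /\ 5 <= size s.

Lemma good_of n W : chk1 (tf (mktbl (gadjr (n %% 6)) n)) n ->
  chk2 (tf (mktbl (gadjr (n %% 6)) n)) n W -> PP1 (G n) /\ PP2 (G n).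
Proof.
rewrite /G -Gf_tbl => H1 H2; split; [exact: chk1_ok | exact: chk2_ok H2].
Qed.

Definition W8 : seq (seq (seq nat)) := [:: [:: [:: ]; [:: ]; [:: ]; [:: ]; [:: 0; 4; 5; 6; 7]; [:: 0; 5; 4; 6; 7]; [:: 0; 6; 4; 5; 7]; [:: 0; 7; 4; 5; 6]]; [:: [:: ]; [:: ]; [:: ]; [:: ]; [:: 0; 2; 3; 1; 4]; [:: 0; 2; 3; 1; 5]; [:: 0; 2; 3; 1; 6]; [:: 0; 2; 3; 1; 7]]; [:: [:: ]; [:: ]; [:: ]; [:: ]; [:: 0; 1; 3; 2; 4]; [:: 0; 1; 3; 2; 5]; [:: 0; 1; 3; 2; 6]; [:: 0; 1; 3; 2; 7]]; [:: [:: ]; [:: ]; [:: ]; [:: ]; [:: 0; 1; 2; 3; 4]; [:: 0; 1; 2; 3; 5]; [:: 0; 1; 2; 3; 6]; [:: 0; 1; 2; 3; 7]]; [:: [:: 0; 4; 5; 6; 7]; [:: 0; 2; 3; 1; 4]; [:: 0; 1; 3; 2; 4]; [:: 0; 1; 2; 3; 4]; [:: ]; [:: ]; [:: ]; [:: ]]; [:: [:: 0; 5; 4; 6; 7]; [:: 0; 2; 3; 1; 5]; [:: 0; 1; 3; 2; 5]; [:: 0; 1; 2; 3; 5]; [:: ]; [:: ]; [:: ]; [:: ]]; [:: [:: 0; 6; 4; 5; 7]; [:: 0; 2; 3; 1; 6]; [:: 0; 1; 3; 2; 6]; [:: 0; 1; 2; 3; 6]; [:: ]; [:: ]; [:: ];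 [:: ]]; [:: [:: 0; 7; 4; 5; 6]; [:: 0; 2; 3; 1; 7]; [:: 0; 1; 3; 2; 7]; [:: 0; 1; 2; 3; 7]; [:: ]; [:: ]; [:: ]; [:: ]]].
Definition W9 : seq (seq (seq nat)) := [:: [:: [:: ]; [:: ]; [:: ]; [:: ]; [:: 1; 2; 3; 0; 4]; [:: 1; 2; 3; 0; 5]; [:: 1; 2; 3; 0; 6]; [:: 0; 7; 4; 5; 6]; [:: 0; 8; 4; 5; 6]]; [:: [:: ]; [:: ]; [:: ]; [:: ]; [:: 0; 2; 3; 1; 4]; [:: 0; 2; 3; 1; 5]; [:: 0; 2; 3; 1; 6]; [:: 0; 1; 7; 4; 5]; [:: 0; 1; 8; 4; 5]]; [:: [:: ]; [:: ]; [:: ]; [:: ]; [:: 0; 1; 3; 2; 4]; [:: 0; 1; 3; 2; 5]; [:: 0; 1; 3; 2; 6]; [:: 0; 1; 2; 7; 4]; [:: 0; 1; 2; 8; 4]]; [:: [:: ]; [:: ]; [:: ]; [:: ]; [:: 0; 1; 2; 3; 4]; [:: 0; 1; 2; 3; 5]; [:: 0; 1; 2; 3; 6]; [:: 0; 1; 2; 3; 7]; [:: 0; 1; 2; 3; 8]]; [:: [:: 1; 2; 3; 0; 4]; [:: 0; 2; 3; 1; 4]; [:: 0; 1; 3; 2; 4]; [:: 0; 1; 2; 3; 4]; [:: ]; [:: ]; [:: ]; [:: ]; [:: ]]; [:: [:: 1; 2; 3; 0; 5]; [:: 0; 2; 3; 1; 5]; [:: 0; 1; 3; 2; 5]; [::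 0; 1; 2; 3; 5]; [:: ]; [:: ]; [:: ]; [:: ]; [:: ]]; [:: [:: 1; 2; 3; 0; 6]; [:: 0; 2; 3; 1; 6]; [:: 0; 1; 3; 2; 6]; [:: 0; 1; 2; 3; 6]; [:: ]; [:: ]; [:: ]; [:: ]; [:: ]]; [:: [:: 0; 7; 4; 5; 6]; [:: 0; 1; 7; 4; 5]; [:: 0; 1; 2; 7; 4]; [:: 0; 1; 2; 3; 7]; [:: ]; [:: ]; [:: ]; [:: ]; [:: 4; 5; 6; 7; 8]]; [:: [:: 0; 8; 4; 5; 6]; [:: 0; 1; 8; 4; 5]; [:: 0; 1; 2; 8; 4]; [:: 0; 1; 2; 3; 8]; [:: ]; [:: ]; [:: ]; [:: 4; 5; 6; 7; 8]; [:: ]]].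
Definition W10 : seq (seq (seq nat)) := [:: [:: [:: ]; [:: ]; [:: ]; [:: ]; [:: 0; 4; 5; 8; 6]; [:: 0; 5; 4; 6; 8]; [:: 0; 6; 4; 5; 8]; [:: 0; 7; 4; 5; 8]; [:: 0; 8; 5; 4; 6]; [:: 0; 9; 5; 4; 6]]; [:: [:: ]; [:: ]; [:: ]; [:: ]; [:: 0; 2; 3; 1; 4]; [:: 0; 2; 3; 1; 5]; [:: 1; 6; 4; 5; 8]; [:: 1; 7; 4; 5; 8]; [:: 1; 8; 5; 4; 6]; [:: 1; 9; 5; 4; 6]]; [:: [:: ]; [:: ]; [:: ]; [:: ]; [:: 0; 1; 3; 2; 4]; [:: 0; 1; 3; 2; 5]; [:: 2; 6; 4; 5; 8]; [:: 2; 7; 4; 5; 8]; [:: 2; 8; 5; 4; 6]; [:: 2; 9; 5; 4; 6]]; [:: [:: ]; [:: ]; [:: ]; [:: ]; [:: 0; 1; 2; 3; 4]; [:: 0; 1; 2; 3; 5]; [:: 3; 6; 4; 5; 8]; [:: 3; 7; 4; 5; 8]; [:: 3; 8; 5; 4; 6]; [:: 3; 9; 5; 4; 6]]; [:: [:: 0; 4; 5; 8; 6]; [:: 0; 2; 3; 1; 4]; [:: 0; 1; 3; 2; 4]; [:: 0; 1; 2; 3; 4]; [:: ]; [:: ]; [:: ]; [:: ]; [:: 4; 8; 5; 9; 7]; [:: 4; 9; 5; 8; 6]]; [:: [:: 0; 5; 4; 6; 8]; [:: 0; 2; 3; 1; 5]; [:: 0; 1; 3; 2; 5]; [:: 0;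 1; 2; 3; 5]; [:: ]; [:: ]; [:: 5; 6; 4; 7; 9]; [:: 5; 7; 4; 6; 8]; [:: ]; [:: ]]; [:: [:: 0; 6; 4; 5; 8]; [:: 1; 6; 4; 5; 8]; [:: 2; 6; 4; 5; 8]; [:: 3; 6; 4; 5; 8]; [:: ]; [:: 5; 6; 4; 7; 9]; [:: ]; [:: 5; 4; 6; 7; 9]; [:: ]; [:: 4; 5; 9; 6; 8]]; [:: [:: 0; 7; 4; 5; 8]; [:: 1; 7; 4; 5; 8]; [:: 2; 7; 4; 5; 8]; [:: 3; 7; 4; 5; 8]; [:: ]; [:: 5; 7; 4; 6; 8]; [:: 5; 4; 6; 7; 9]; [:: ]; [:: 4; 5; 8; 7; 9]; [:: ]]; [:: [:: 0; 8; 5; 4; 6]; [:: 1; 8; 5; 4; 6]; [:: 2; 8; 5; 4; 6]; [:: 3; 8; 5; 4; 6]; [:: 4; 8; 5; 9; 7]; [:: ]; [:: ]; [:: 4; 5; 8; 7; 9]; [:: ]; [:: 4; 5; 8; 9; 7]]; [:: [:: 0; 9; 5; 4; 6]; [:: 1; 9; 5; 4; 6]; [:: 2; 9; 5; 4; 6]; [:: 3; 9; 5; 4; 6]; [:: 4; 9; 5; 8; 6]; [:: ]; [:: 4; 5; 9; 6; 8]; [:: ]; [:: 4; 5; 8; 9; 7]; [:: ]]].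
Definition W11 : seq (seq (seq nat)) := [:: [:: [:: ]; [:: ]; [:: ]; [:: ]; [:: ]; [:: 0; 5; 6; 9; 7]; [:: 0; 6; 5; 7; 9]; [:: 0; 7; 5; 6; 9]; [:: 0; 8; 5; 6; 9]; [:: 0; 9; 6; 5; 7]; [:: 0; 10; 6; 5; 7]]; [:: [:: ]; [:: ]; [:: ]; [:: ]; [:: ]; [:: 1; 5; 6; 9; 7]; [:: 1; 6; 5; 7; 9]; [:: 1; 7; 5; 6; 9]; [:: 1; 8; 5; 6; 9]; [:: 1; 9; 6; 5; 7]; [:: 1; 10; 6; 5; 7]]; [:: [:: ]; [:: ]; [:: ]; [:: ]; [:: ]; [:: 2; 5; 6; 9; 7]; [:: 2; 6; 5; 7; 9]; [:: 2; 7; 5; 6; 9]; [:: 2; 8; 5; 6; 9]; [:: 2; 9; 6; 5; 7]; [:: 2; 10; 6; 5; 7]]; [:: [:: ]; [:: ]; [:: ]; [:: ]; [:: 0; 1; 2; 3; 4]; [:: 0; 1; 2; 3; 5]; [:: 0; 1; 2; 3; 6]; [:: 0; 1; 2; 3; 7]; [:: 0; 1; 2; 3; 8]; [:: 0; 1; 2; 3; 9]; [:: 0; 1; 2; 3; 10]]; [:: [:: ]; [:: ]; [:: ]; [:: 0; 1; 2; 3; 4]; [:: ]; [:: 0; 1; 2; 4; 5]; [:: 0; 1; 2; 4; 6]; [:: 0; 1; 2; 4; 7]; [:: 0; 1; 2; 4; 8]; [:: 0; 1; 2; 4; 9]; [:: 0; 1; 2; 4; 10]]; [:: [:: 0; 5;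 6; 9; 7]; [:: 1; 5; 6; 9; 7]; [:: 2; 5; 6; 9; 7]; [:: 0; 1; 2; 3; 5]; [:: 0; 1; 2; 4; 5]; [:: ]; [:: ]; [:: ]; [:: ]; [:: 5; 9; 6; 10; 8]; [:: 5; 10; 6; 9; 7]]; [:: [:: 0; 6; 5; 7; 9]; [:: 1; 6; 5; 7; 9]; [:: 2; 6; 5; 7; 9]; [:: 0; 1; 2; 3; 6]; [:: 0; 1; 2; 4; 6]; [:: ]; [:: ]; [:: 6; 7; 5; 8; 10]; [:: 6; 8; 5; 7; 9]; [:: ]; [:: ]]; [:: [:: 0; 7; 5; 6; 9]; [:: 1; 7; 5; 6; 9]; [:: 2; 7; 5; 6; 9]; [:: 0; 1; 2; 3; 7]; [:: 0; 1; 2; 4; 7]; [:: ]; [:: 6; 7; 5; 8; 10]; [:: ]; [:: 6; 5; 7; 8; 10]; [:: ]; [:: 5; 6; 10; 7; 9]]; [:: [:: 0; 8; 5; 6; 9]; [:: 1; 8; 5; 6; 9]; [:: 2; 8; 5; 6; 9]; [:: 0; 1; 2; 3; 8]; [:: 0; 1; 2; 4; 8]; [:: ]; [:: 6; 8; 5; 7; 9]; [:: 6; 5; 7; 8; 10]; [:: ]; [:: 5; 6; 9; 8; 10]; [:: ]]; [:: [:: 0; 9; 6; 5; 7]; [:: 1; 9; 6; 5; 7]; [:: 2; 9; 6; 5; 7]; [:: 0; 1; 2; 3; 9]; [:: 0; 1; 2; 4; 9]; [:: 5; 9; 6; 10; 8]; [:: ]; [:: ]; [:: 5; 6; 9; 8;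 10]; [:: ]; [:: 5; 6; 9; 10; 8]]; [:: [:: 0; 10; 6; 5; 7]; [:: 1; 10; 6; 5; 7]; [:: 2; 10; 6; 5; 7]; [:: 0; 1; 2; 3; 10]; [:: 0; 1; 2; 4; 10]; [:: 5; 10; 6; 9; 7]; [:: ]; [:: 5; 6; 10; 7; 9]; [:: ]; [:: 5; 6; 9; 10; 8]; [:: ]]].
Definition W12 : seq (seq (seq nat)) := [:: [:: [:: ]; [:: ]; [:: ]; [:: ]; [:: 0; 4; 1; 5; 3]; [:: 0; 5; 1; 4; 2]; [:: 0; 6; 7; 10; 8]; [:: 0; 7; 6; 8; 10]; [:: 0; 8; 6; 7; 10]; [:: 0; 9; 6; 7; 10]; [:: 0; 10; 7; 6; 8]; [:: 0; 11; 7; 6; 8]]; [:: [:: ]; [:: ]; [:: 1; 2; 0; 3; 5]; [:: 1; 3; 0; 2; 4]; [:: ]; [:: ]; [:: 1; 6; 7; 10; 8]; [:: 1; 7; 6; 8; 10]; [:: 1; 8; 6; 7; 10]; [:: 1; 9; 6; 7; 10]; [:: 1; 10; 7; 6; 8]; [:: 1; 11; 7; 6; 8]]; [:: [:: ]; [:: 1; 2; 0; 3; 5]; [:: ]; [:: 1; 0; 2; 3; 5]; [:: ]; [:: 0; 1; 5; 2; 4]; [:: 2; 0; 1; 5; 3]; [:: 2; 0; 1; 5; 3]; [:: 0; 2; 8; 6; 7]; [:: 0; 2; 9; 6; 7]; [:: 0; 2; 10; 7; 6]; [:: 0; 2; 11; 7; 6]]; [:: [:: ]; [:: 1; 3; 0;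 2; 4]; [:: 1; 0; 2; 3; 5]; [:: ]; [:: 0; 1; 4; 3; 5]; [:: ]; [:: 2; 4; 1; 0; 3]; [:: 2; 4; 1; 0; 3]; [:: 0; 3; 8; 6; 7]; [:: 0; 3; 9; 6; 7]; [:: 0; 3; 10; 7; 6]; [:: 0; 3; 11; 7; 6]]; [:: [:: 0; 4; 1; 5; 3]; [:: ]; [:: ]; [:: 0; 1; 4; 3; 5]; [:: ]; [:: 0; 1; 4; 5; 3]; [:: 2; 0; 1; 4; 6]; [:: 2; 0; 1; 4; 7]; [:: 0; 1; 4; 8; 6]; [:: 0; 1; 4; 9; 6]; [:: 0; 1; 4; 10; 7]; [:: 0; 1; 4; 11; 7]]; [:: [:: 0; 5; 1; 4; 2]; [:: ]; [:: 0; 1; 5; 2; 4]; [:: ]; [:: 0; 1; 4; 5; 3]; [:: ]; [:: 2; 0; 1; 5; 6]; [:: 2; 0; 1; 5; 7]; [:: 0; 1; 5; 8; 6]; [:: 0; 1; 5; 9; 6]; [:: 0; 1; 5; 10; 7]; [:: 0; 1; 5; 11; 7]]; [:: [:: 0; 6; 7; 10; 8]; [:: 1; 6; 7; 10; 8]; [:: 2; 0; 1; 5; 3]; [:: 2; 4; 1; 0; 3]; [:: 2; 0; 1; 4; 6]; [:: 2; 0; 1; 5; 6]; [:: ]; [:: ]; [:: ]; [:: ]; [:: 6; 10; 7; 11; 9]; [:: 6; 11; 7; 10; 8]]; [:: [:: 0; 7; 6; 8; 10]; [:: 1; 7; 6; 8; 10]; [:: 2; 0; 1; 5; 3]; [::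 2; 4; 1; 0; 3]; [:: 2; 0; 1; 4; 7]; [:: 2; 0; 1; 5; 7]; [:: ]; [:: ]; [:: 7; 8; 6; 9; 11]; [:: 7; 9; 6; 8; 10]; [:: ]; [:: ]]; [:: [:: 0; 8; 6; 7; 10]; [:: 1; 8; 6; 7; 10]; [:: 0; 2; 8; 6; 7]; [:: 0; 3; 8; 6; 7]; [:: 0; 1; 4; 8; 6]; [:: 0; 1; 5; 8; 6]; [:: ]; [:: 7; 8; 6; 9; 11]; [:: ]; [:: 7; 6; 8; 9; 11]; [:: ]; [:: 6; 7; 11; 8; 10]]; [:: [:: 0; 9; 6; 7; 10]; [:: 1; 9; 6; 7; 10]; [:: 0; 2; 9; 6; 7]; [:: 0; 3; 9; 6; 7]; [:: 0; 1; 4; 9; 6]; [:: 0; 1; 5; 9; 6]; [:: ]; [:: 7; 9; 6; 8; 10]; [:: 7; 6; 8; 9; 11]; [:: ]; [:: 6; 7; 10; 9; 11]; [:: ]]; [:: [:: 0; 10; 7; 6; 8]; [:: 1; 10; 7; 6; 8]; [:: 0; 2; 10; 7; 6]; [:: 0; 3; 10; 7; 6]; [:: 0; 1; 4; 10; 7]; [:: 0; 1; 5; 10; 7]; [:: 6; 10; 7; 11; 9]; [:: ]; [:: ]; [:: 6; 7; 10; 9; 11]; [:: ]; [:: 6; 7; 10; 11; 9]]; [:: [:: 0; 11; 7; 6; 8]; [:: 1; 11; 7; 6; 8]; [:: 0; 2; 11; 7; 6]; [:: 0; 3; 11; 7; 6]; [:: 0; 1; 4; 11; 7]; [:: 0;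 1; 5; 11; 7]; [:: 6; 11; 7; 10; 8]; [:: ]; [:: 6; 7; 11; 8; 10]; [:: ]; [:: 6; 7; 10; 11; 9]; [:: ]]].
Definition W13 : seq (seq (seq nat)) := [:: [:: [:: ]; [:: ]; [:: ]; [:: ]; [:: 0; 4; 5; 6; 7]; [:: 0; 5; 4; 6; 7]; [:: 0; 6; 4; 5; 7]; [:: 0; 7; 4; 5; 6]; [:: 1; 2; 3; 0; 8]; [:: 1; 2; 3; 0; 9]; [:: 1; 2; 3; 0; 10]; [:: 0; 11; 8; 9; 10]; [:: 0; 12; 8; 9; 10]]; [:: [:: ]; [:: ]; [:: ]; [:: ]; [:: 0; 2; 3; 1; 4]; [:: 0; 2; 3; 1; 5]; [:: 0; 2; 3; 1; 6]; [:: 0; 2; 3; 1; 7]; [:: 0; 2; 3; 1; 8]; [:: 0; 2; 3; 1; 9]; [:: 0; 2; 3; 1; 10]; [:: 0; 1; 11; 8; 9]; [:: 0; 1; 12; 8; 9]]; [:: [:: ]; [:: ]; [:: ]; [:: ]; [:: 0; 1; 3; 2; 4]; [:: 0; 1; 3; 2; 5]; [:: 0; 1; 3; 2; 6]; [:: 0; 1; 3; 2; 7]; [:: 0; 1; 3; 2; 8]; [:: 0; 1; 3; 2; 9]; [:: 0; 1; 3; 2; 10]; [:: 0; 1; 2; 11; 8]; [:: 0; 1; 2; 12; 8]]; [:: [:: ]; [:: ]; [:: ]; [:: ]; [:: 0; 1; 2; 3; 4]; [:: 0; 1; 2; 3; 5]; [:: 0; 1; 2; 3; 6]; [:: 0;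 1; 2; 3; 7]; [:: 0; 1; 2; 3; 8]; [:: 0; 1; 2; 3; 9]; [:: 0; 1; 2; 3; 10]; [:: 0; 1; 2; 3; 11]; [:: 0; 1; 2; 3; 12]]; [:: [:: 0; 4; 5; 6; 7]; [:: 0; 2; 3; 1; 4]; [:: 0; 1; 3; 2; 4]; [:: 0; 1; 2; 3; 4]; [:: ]; [:: ]; [:: ]; [:: ]; [:: 5; 6; 7; 4; 8]; [:: 5; 6; 7; 4; 9]; [:: 5; 6; 7; 4; 10]; [:: 4; 11; 8; 9; 10]; [:: 4; 12; 8; 9; 10]]; [:: [:: 0; 5; 4; 6; 7]; [:: 0; 2; 3; 1; 5]; [:: 0; 1; 3; 2; 5]; [:: 0; 1; 2; 3; 5]; [:: ]; [:: ]; [:: ]; [:: ]; [:: 4; 6; 7; 5; 8]; [:: 4; 6; 7; 5; 9]; [:: 4; 6; 7; 5; 10]; [:: 4; 5; 11; 8; 9]; [:: 4; 5; 12; 8; 9]]; [:: [:: 0; 6; 4; 5; 7]; [:: 0; 2; 3; 1; 6]; [:: 0; 1; 3; 2; 6]; [:: 0; 1; 2; 3; 6]; [:: ]; [:: ]; [:: ]; [:: ]; [:: 4; 5; 7; 6; 8]; [:: 4; 5; 7; 6; 9]; [:: 4; 5; 7; 6; 10]; [:: 4; 5; 6; 11; 8]; [:: 4; 5; 6; 12; 8]]; [:: [:: 0; 7; 4; 5; 6]; [:: 0; 2; 3; 1; 7]; [:: 0; 1; 3; 2; 7]; [:: 0; 1; 2; 3; 7]; [:: ]; [:: ]; [:: ];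 [:: ]; [:: 4; 5; 6; 7; 8]; [:: 4; 5; 6; 7; 9]; [:: 4; 5; 6; 7; 10]; [:: 4; 5; 6; 7; 11]; [:: 4; 5; 6; 7; 12]]; [:: [:: 1; 2; 3; 0; 8]; [:: 0; 2; 3; 1; 8]; [:: 0; 1; 3; 2; 8]; [:: 0; 1; 2; 3; 8]; [:: 5; 6; 7; 4; 8]; [:: 4; 6; 7; 5; 8]; [:: 4; 5; 7; 6; 8]; [:: 4; 5; 6; 7; 8]; [:: ]; [:: ]; [:: ]; [:: ]; [:: ]]; [:: [:: 1; 2; 3; 0; 9]; [:: 0; 2; 3; 1; 9]; [:: 0; 1; 3; 2; 9]; [:: 0; 1; 2; 3; 9]; [:: 5; 6; 7; 4; 9]; [:: 4; 6; 7; 5; 9]; [:: 4; 5; 7; 6; 9]; [:: 4; 5; 6; 7; 9]; [:: ]; [:: ]; [:: ]; [:: ]; [:: ]]; [:: [:: 1; 2; 3; 0; 10]; [:: 0; 2; 3; 1; 10]; [:: 0; 1; 3; 2; 10]; [:: 0; 1; 2; 3; 10]; [:: 5; 6; 7; 4; 10]; [:: 4; 6; 7; 5; 10]; [:: 4; 5; 7; 6; 10]; [:: 4; 5; 6; 7; 10]; [:: ]; [:: ]; [:: ]; [:: ]; [:: ]]; [:: [:: 0; 11; 8; 9; 10]; [:: 0; 1; 11; 8; 9]; [:: 0; 1; 2; 11; 8]; [:: 0; 1; 2; 3; 11]; [:: 4; 11; 8; 9; 10]; [:: 4; 5; 11; 8; 9]; [:: 4; 5; 6; 11; 8]; [:: 4;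 5; 6; 7; 11]; [:: ]; [:: ]; [:: ]; [:: ]; [:: 8; 9; 10; 11; 12]]; [:: [:: 0; 12; 8; 9; 10]; [:: 0; 1; 12; 8; 9]; [:: 0; 1; 2; 12; 8]; [:: 0; 1; 2; 3; 12]; [:: 4; 12; 8; 9; 10]; [:: 4; 5; 12; 8; 9]; [:: 4; 5; 6; 12; 8]; [:: 4; 5; 6; 7; 12]; [:: ]; [:: ]; [:: ]; [:: 8; 9; 10; 11; 12]; [:: ]]].
Definition W14 : seq (seq (seq nat)) := [:: [:: [:: ]; [:: ]; [:: ]; [:: ]; [:: 0; 4; 5; 6; 7]; [:: 0; 5; 4; 6; 7]; [:: 0; 6; 4; 5; 7]; [:: 0; 7; 4; 5; 6]; [:: 0; 8; 9; 12; 10]; [:: 0; 9; 8; 10; 12]; [:: 0; 10; 8; 9; 12]; [:: 0; 11; 8; 9; 12]; [:: 0; 12; 9; 8; 10]; [:: 0; 13; 9; 8; 10]]; [:: [:: ]; [:: ]; [:: ]; [:: ]; [:: 0; 2; 3; 1; 4]; [:: 0; 2; 3; 1; 5]; [:: 0; 2; 3; 1; 6]; [:: 0; 2; 3; 1; 7]; [:: 0; 2; 3; 1; 8]; [:: 0; 2; 3; 1; 9]; [:: 1; 10; 8; 9; 12]; [:: 1; 11; 8; 9; 12]; [:: 1; 12; 9; 8; 10]; [:: 1; 13; 9; 8; 10]]; [:: [:: ]; [:: ]; [:: ]; [:: ]; [:: 0; 1; 3; 2; 4]; [:: 0; 1; 3; 2; 5]; [:: 0; 1; 3; 2; 6]; [::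 0; 1; 3; 2; 7]; [:: 0; 1; 3; 2; 8]; [:: 0; 1; 3; 2; 9]; [:: 2; 10; 8; 9; 12]; [:: 2; 11; 8; 9; 12]; [:: 2; 12; 9; 8; 10]; [:: 2; 13; 9; 8; 10]]; [:: [:: ]; [:: ]; [:: ]; [:: ]; [:: 0; 1; 2; 3; 4]; [:: 0; 1; 2; 3; 5]; [:: 0; 1; 2; 3; 6]; [:: 0; 1; 2; 3; 7]; [:: 0; 1; 2; 3; 8]; [:: 0; 1; 2; 3; 9]; [:: 3; 10; 8; 9; 12]; [:: 3; 11; 8; 9; 12]; [:: 3; 12; 9; 8; 10]; [:: 3; 13; 9; 8; 10]]; [:: [:: 0; 4; 5; 6; 7]; [:: 0; 2; 3; 1; 4]; [:: 0; 1; 3; 2; 4]; [:: 0; 1; 2; 3; 4]; [:: ]; [:: ]; [:: ]; [:: ]; [:: 4; 8; 9; 12; 10]; [:: 4; 9; 8; 10; 12]; [:: 4; 10; 8; 9; 12]; [:: 4; 11; 8; 9; 12]; [:: 4; 12; 9; 8; 10]; [:: 4; 13; 9; 8; 10]]; [:: [:: 0; 5; 4; 6; 7]; [:: 0; 2; 3; 1; 5]; [:: 0; 1; 3; 2; 5]; [:: 0; 1; 2; 3; 5]; [:: ]; [:: ]; [:: ]; [:: ]; [:: 4; 6; 7; 5; 8]; [:: 4; 6; 7; 5; 9]; [:: 5; 10; 8; 9; 12]; [:: 5; 11; 8; 9; 12]; [:: 5; 12; 9; 8; 10]; [:: 5; 13; 9; 8; 10]]; [:: [:: 0; 6; 4;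 5; 7]; [:: 0; 2; 3; 1; 6]; [:: 0; 1; 3; 2; 6]; [:: 0; 1; 2; 3; 6]; [:: ]; [:: ]; [:: ]; [:: ]; [:: 4; 5; 7; 6; 8]; [:: 4; 5; 7; 6; 9]; [:: 6; 10; 8; 9; 12]; [:: 6; 11; 8; 9; 12]; [:: 6; 12; 9; 8; 10]; [:: 6; 13; 9; 8; 10]]; [:: [:: 0; 7; 4; 5; 6]; [:: 0; 2; 3; 1; 7]; [:: 0; 1; 3; 2; 7]; [:: 0; 1; 2; 3; 7]; [:: ]; [:: ]; [:: ]; [:: ]; [:: 4; 5; 6; 7; 8]; [:: 4; 5; 6; 7; 9]; [:: 7; 10; 8; 9; 12]; [:: 7; 11; 8; 9; 12]; [:: 7; 12; 9; 8; 10]; [:: 7; 13; 9; 8; 10]]; [:: [:: 0; 8; 9; 12; 10]; [:: 0; 2; 3; 1; 8]; [:: 0; 1; 3; 2; 8]; [:: 0; 1; 2; 3; 8]; [:: 4; 8; 9; 12; 10]; [:: 4; 6; 7; 5; 8]; [:: 4; 5; 7; 6; 8]; [:: 4; 5; 6; 7; 8]; [:: ]; [:: ]; [:: ]; [:: ]; [:: 8; 12; 9; 13; 11]; [:: 8; 13; 9; 12; 10]]; [:: [:: 0; 9; 8; 10; 12]; [:: 0; 2; 3; 1; 9]; [:: 0; 1; 3; 2; 9]; [:: 0; 1; 2; 3; 9]; [:: 4; 9; 8; 10; 12]; [:: 4; 6; 7; 5; 9]; [:: 4; 5; 7; 6; 9]; [:: 4; 5; 6; 7; 9]; [:: ]; [::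 ]; [:: 9; 10; 8; 11; 13]; [:: 9; 11; 8; 10; 12]; [:: ]; [:: ]]; [:: [:: 0; 10; 8; 9; 12]; [:: 1; 10; 8; 9; 12]; [:: 2; 10; 8; 9; 12]; [:: 3; 10; 8; 9; 12]; [:: 4; 10; 8; 9; 12]; [:: 5; 10; 8; 9; 12]; [:: 6; 10; 8; 9; 12]; [:: 7; 10; 8; 9; 12]; [:: ]; [:: 9; 10; 8; 11; 13]; [:: ]; [:: 9; 8; 10; 11; 13]; [:: ]; [:: 8; 9; 13; 10; 12]]; [:: [:: 0; 11; 8; 9; 12]; [:: 1; 11; 8; 9; 12]; [:: 2; 11; 8; 9; 12]; [:: 3; 11; 8; 9; 12]; [:: 4; 11; 8; 9; 12]; [:: 5; 11; 8; 9; 12]; [:: 6; 11; 8; 9; 12]; [:: 7; 11; 8; 9; 12]; [:: ]; [:: 9; 11; 8; 10; 12]; [:: 9; 8; 10; 11; 13]; [:: ]; [:: 8; 9; 12; 11; 13]; [:: ]]; [:: [:: 0; 12; 9; 8; 10]; [:: 1; 12; 9; 8; 10]; [:: 2; 12; 9; 8; 10]; [:: 3; 12; 9; 8; 10]; [:: 4; 12; 9; 8; 10]; [:: 5; 12; 9; 8; 10]; [:: 6; 12; 9; 8; 10]; [:: 7; 12; 9; 8; 10]; [:: 8; 12; 9; 13; 11]; [:: ]; [:: ]; [:: 8; 9; 12; 11; 13]; [:: ]; [:: 8; 9; 12; 13; 11]]; [:: [:: 0; 13; 9; 8; 10]; [:: 1; 13; 9; 8; 10]; [:: 2; 13; 9;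 8; 10]; [:: 3; 13; 9; 8; 10]; [:: 4; 13; 9; 8; 10]; [:: 5; 13; 9; 8; 10]; [:: 6; 13; 9; 8; 10]; [:: 7; 13; 9; 8; 10]; [:: 8; 13; 9; 12; 10]; [:: ]; [:: 8; 9; 13; 10; 12]; [:: ]; [:: 8; 9; 12; 13; 11]; [:: ]]].
Definition W15 : seq (seq (seq nat)) := [:: [:: [:: ]; [:: ]; [:: ]; [:: ]; [:: 1; 2; 3; 0; 4]; [:: 1; 2; 3; 0; 5]; [:: 1; 2; 3; 0; 6]; [:: 0; 7; 4; 5; 6]; [:: 0; 8; 4; 5; 6]; [:: 0; 9; 10; 13; 11]; [:: 0; 10; 9; 11; 13]; [:: 0; 11; 9; 10; 13]; [:: 0; 12; 9; 10; 13]; [:: 0; 13; 10; 9; 11]; [:: 0; 14; 10; 9; 11]]; [:: [:: ]; [:: ]; [:: ]; [:: ]; [:: 0; 2; 3; 1; 4]; [:: 0; 2; 3; 1; 5]; [:: 0; 2; 3; 1; 6]; [:: 0; 1; 7; 4; 5]; [:: 0; 1; 8; 4; 5]; [:: 0; 2; 3; 1; 9]; [:: 0; 2; 3; 1; 10]; [:: 1; 11; 9; 10; 13]; [:: 1; 12; 9; 10; 13]; [:: 1; 13; 10; 9; 11]; [:: 1; 14; 10; 9; 11]]; [:: [:: ]; [:: ]; [:: ]; [:: ]; [:: 0; 1; 3; 2; 4]; [:: 0; 1; 3; 2; 5]; [:: 0; 1; 3; 2; 6]; [:: 0; 1; 2; 7; 4]; [:: 0; 1; 2; 8; 4]; [::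 0; 1; 3; 2; 9]; [:: 0; 1; 3; 2; 10]; [:: 2; 11; 9; 10; 13]; [:: 2; 12; 9; 10; 13]; [:: 2; 13; 10; 9; 11]; [:: 2; 14; 10; 9; 11]]; [:: [:: ]; [:: ]; [:: ]; [:: ]; [:: 0; 1; 2; 3; 4]; [:: 0; 1; 2; 3; 5]; [:: 0; 1; 2; 3; 6]; [:: 0; 1; 2; 3; 7]; [:: 0; 1; 2; 3; 8]; [:: 0; 1; 2; 3; 9]; [:: 0; 1; 2; 3; 10]; [:: 3; 11; 9; 10; 13]; [:: 3; 12; 9; 10; 13]; [:: 3; 13; 10; 9; 11]; [:: 3; 14; 10; 9; 11]]; [:: [:: 1; 2; 3; 0; 4]; [:: 0; 2; 3; 1; 4]; [:: 0; 1; 3; 2; 4]; [:: 0; 1; 2; 3; 4]; [:: ]; [:: ]; [:: ]; [:: ]; [:: ]; [:: 4; 9; 10; 13; 11]; [:: 4; 10; 9; 11; 13]; [:: 4; 11; 9; 10; 13]; [:: 4; 12; 9; 10; 13]; [:: 4; 13; 10; 9; 11]; [:: 4; 14; 10; 9; 11]]; [:: [:: 1; 2; 3; 0; 5]; [:: 0; 2; 3; 1; 5]; [:: 0; 1; 3; 2; 5]; [:: 0; 1; 2; 3; 5]; [:: ]; [:: ]; [:: ]; [:: ]; [:: ]; [:: 5; 9; 10; 13; 11]; [:: 5; 10; 9; 11; 13]; [:: 5; 11; 9; 10; 13]; [:: 5; 12; 9; 10; 13]; [:: 5; 13; 10; 9; 11]; [:: 5; 14; 10; 9; 11]]; [:: [::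 1; 2; 3; 0; 6]; [:: 0; 2; 3; 1; 6]; [:: 0; 1; 3; 2; 6]; [:: 0; 1; 2; 3; 6]; [:: ]; [:: ]; [:: ]; [:: ]; [:: ]; [:: 6; 9; 10; 13; 11]; [:: 6; 10; 9; 11; 13]; [:: 6; 11; 9; 10; 13]; [:: 6; 12; 9; 10; 13]; [:: 6; 13; 10; 9; 11]; [:: 6; 14; 10; 9; 11]]; [:: [:: 0; 7; 4; 5; 6]; [:: 0; 1; 7; 4; 5]; [:: 0; 1; 2; 7; 4]; [:: 0; 1; 2; 3; 7]; [:: ]; [:: ]; [:: ]; [:: ]; [:: 4; 5; 6; 7; 8]; [:: 4; 5; 6; 7; 9]; [:: 4; 5; 6; 7; 10]; [:: 4; 5; 6; 7; 11]; [:: 4; 5; 6; 7; 12]; [:: 4; 5; 6; 7; 13]; [:: 4; 5; 6; 7; 14]]; [:: [:: 0; 8; 4; 5; 6]; [:: 0; 1; 8; 4; 5]; [:: 0; 1; 2; 8; 4]; [:: 0; 1; 2; 3; 8]; [:: ]; [:: ]; [:: ]; [:: 4; 5; 6; 7; 8]; [:: ]; [:: 4; 5; 6; 8; 9]; [:: 4; 5; 6; 8; 10]; [:: 4; 5; 6; 8; 11]; [:: 4; 5; 6; 8; 12]; [:: 4; 5; 6; 8; 13]; [:: 4; 5; 6; 8; 14]]; [:: [:: 0; 9; 10; 13; 11]; [:: 0; 2; 3; 1; 9]; [:: 0; 1; 3; 2; 9]; [:: 0; 1; 2; 3; 9]; [:: 4; 9; 10; 13; 11]; [:: 5; 9; 10;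 13; 11]; [:: 6; 9; 10; 13; 11]; [:: 4; 5; 6; 7; 9]; [:: 4; 5; 6; 8; 9]; [:: ]; [:: ]; [:: ]; [:: ]; [:: 9; 13; 10; 14; 12]; [:: 9; 14; 10; 13; 11]]; [:: [:: 0; 10; 9; 11; 13]; [:: 0; 2; 3; 1; 10]; [:: 0; 1; 3; 2; 10]; [:: 0; 1; 2; 3; 10]; [:: 4; 10; 9; 11; 13]; [:: 5; 10; 9; 11; 13]; [:: 6; 10; 9; 11; 13]; [:: 4; 5; 6; 7; 10]; [:: 4; 5; 6; 8; 10]; [:: ]; [:: ]; [:: 10; 11; 9; 12; 14]; [:: 10; 12; 9; 11; 13]; [:: ]; [:: ]]; [:: [:: 0; 11; 9; 10; 13]; [:: 1; 11; 9; 10; 13]; [:: 2; 11; 9; 10; 13]; [:: 3; 11; 9; 10; 13]; [:: 4; 11; 9; 10; 13]; [:: 5; 11; 9; 10; 13]; [:: 6; 11; 9; 10; 13]; [:: 4; 5; 6; 7; 11]; [:: 4; 5; 6; 8; 11]; [:: ]; [:: 10; 11; 9; 12; 14]; [:: ]; [:: 10; 9; 11; 12; 14]; [:: ]; [:: 9; 10; 14; 11; 13]]; [:: [:: 0; 12; 9; 10; 13]; [:: 1; 12; 9; 10; 13]; [:: 2; 12; 9; 10; 13]; [:: 3; 12; 9; 10; 13]; [:: 4; 12; 9; 10; 13]; [:: 5; 12; 9; 10; 13]; [:: 6; 12; 9; 10; 13]; [:: 4; 5; 6; 7; 12]; [:: 4; 5; 6; 8; 12]; [:: ]; [:: 10;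 12; 9; 11; 13]; [:: 10; 9; 11; 12; 14]; [:: ]; [:: 9; 10; 13; 12; 14]; [:: ]]; [:: [:: 0; 13; 10; 9; 11]; [:: 1; 13; 10; 9; 11]; [:: 2; 13; 10; 9; 11]; [:: 3; 13; 10; 9; 11]; [:: 4; 13; 10; 9; 11]; [:: 5; 13; 10; 9; 11]; [:: 6; 13; 10; 9; 11]; [:: 4; 5; 6; 7; 13]; [:: 4; 5; 6; 8; 13]; [:: 9; 13; 10; 14; 12]; [:: ]; [:: ]; [:: 9; 10; 13; 12; 14]; [:: ]; [:: 9; 10; 13; 14; 12]]; [:: [:: 0; 14; 10; 9; 11]; [:: 1; 14; 10; 9; 11]; [:: 2; 14; 10; 9; 11]; [:: 3; 14; 10; 9; 11]; [:: 4; 14; 10; 9; 11]; [:: 5; 14; 10; 9; 11]; [:: 6; 14; 10; 9; 11]; [:: 4; 5; 6; 7; 14]; [:: 4; 5; 6; 8; 14]; [:: 9; 14; 10; 13; 11]; [:: ]; [:: 9; 10; 14; 11; 13]; [:: ]; [:: 9; 10; 13; 14; 12]; [:: ]]].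
Definition W16 : seq (seq (seq nat)) := [:: [:: [:: ]; [:: ]; [:: ]; [:: ]; [:: 0; 4; 5; 8; 6]; [:: 0; 5; 4; 6; 8]; [:: 0; 6; 4; 5; 8]; [:: 0; 7; 4; 5; 8]; [:: 0; 8; 5; 4; 6]; [:: 0; 9; 5; 4; 6]; [:: 0; 10; 11; 14; 12]; [:: 0; 11; 10; 12; 14]; [:: 0; 12; 10; 11; 14]; [:: 0; 13; 10; 11; 14]; [:: 0; 14; 11; 10; 12]; [:: 0; 15; 11; 10; 12]]; [:: [:: ]; [:: ]; [:: ]; [:: ]; [:: 0; 2; 3; 1; 4]; [:: 0; 2; 3; 1; 5]; [:: 1; 6; 4; 5; 8]; [:: 1; 7; 4; 5; 8]; [:: 1; 8; 5; 4; 6]; [:: 1; 9; 5; 4; 6]; [:: 0; 2; 3; 1; 10]; [:: 0; 2; 3; 1; 11]; [:: 1; 12; 10; 11; 14]; [:: 1; 13; 10; 11; 14]; [:: 1; 14; 11; 10; 12]; [:: 1; 15; 11; 10; 12]]; [:: [:: ]; [:: ]; [:: ]; [:: ]; [:: 0; 1; 3; 2; 4]; [:: 0; 1; 3; 2; 5]; [:: 2; 6; 4; 5; 8]; [:: 2; 7; 4; 5; 8]; [:: 2; 8; 5; 4; 6]; [:: 2; 9; 5; 4; 6]; [:: 0; 1; 3; 2; 10]; [:: 0; 1; 3; 2; 11]; [:: 2; 12; 10; 11; 14]; [:: 2; 13; 10; 11; 14]; [:: 2; 14; 11; 10; 12]; [:: 2; 15; 11; 10; 12]]; [:: [:: ];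 [:: ]; [:: ]; [:: ]; [:: 0; 1; 2; 3; 4]; [:: 0; 1; 2; 3; 5]; [:: 3; 6; 4; 5; 8]; [:: 3; 7; 4; 5; 8]; [:: 3; 8; 5; 4; 6]; [:: 3; 9; 5; 4; 6]; [:: 0; 1; 2; 3; 10]; [:: 0; 1; 2; 3; 11]; [:: 3; 12; 10; 11; 14]; [:: 3; 13; 10; 11; 14]; [:: 3; 14; 11; 10; 12]; [:: 3; 15; 11; 10; 12]]; [:: [:: 0; 4; 5; 8; 6]; [:: 0; 2; 3; 1; 4]; [:: 0; 1; 3; 2; 4]; [:: 0; 1; 2; 3; 4]; [:: ]; [:: ]; [:: ]; [:: ]; [:: 4; 8; 5; 9; 7]; [:: 4; 9; 5; 8; 6]; [:: 4; 10; 11; 14; 12]; [:: 4; 11; 10; 12; 14]; [:: 4; 12; 10; 11; 14]; [:: 4; 13; 10; 11; 14]; [:: 4; 14; 11; 10; 12]; [:: 4; 15; 11; 10; 12]]; [:: [:: 0; 5; 4; 6; 8]; [:: 0; 2; 3; 1; 5]; [:: 0; 1; 3; 2; 5]; [:: 0; 1; 2; 3; 5]; [:: ]; [:: ]; [:: 5; 6; 4; 7; 9]; [:: 5; 7; 4; 6; 8]; [:: ]; [:: ]; [:: 5; 10; 11; 14; 12]; [:: 5; 11; 10; 12; 14]; [:: 5; 12; 10; 11; 14]; [:: 5; 13; 10; 11; 14]; [:: 5; 14; 11; 10; 12]; [:: 5; 15; 11; 10; 12]]; [:: [:: 0; 6; 4; 5; 8]; [:: 1; 6; 4; 5; 8];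 [:: 2; 6; 4; 5; 8]; [:: 3; 6; 4; 5; 8]; [:: ]; [:: 5; 6; 4; 7; 9]; [:: ]; [:: 5; 4; 6; 7; 9]; [:: ]; [:: 4; 5; 9; 6; 8]; [:: 6; 4; 5; 9; 7]; [:: 6; 4; 5; 9; 7]; [:: 4; 6; 12; 10; 11]; [:: 4; 6; 13; 10; 11]; [:: 4; 6; 14; 11; 10]; [:: 4; 6; 15; 11; 10]]; [:: [:: 0; 7; 4; 5; 8]; [:: 1; 7; 4; 5; 8]; [:: 2; 7; 4; 5; 8]; [:: 3; 7; 4; 5; 8]; [:: ]; [:: 5; 7; 4; 6; 8]; [:: 5; 4; 6; 7; 9]; [:: ]; [:: 4; 5; 8; 7; 9]; [:: ]; [:: 6; 8; 5; 4; 7]; [:: 6; 8; 5; 4; 7]; [:: 4; 7; 12; 10; 11]; [:: 4; 7; 13; 10; 11]; [:: 4; 7; 14; 11; 10]; [:: 4; 7; 15; 11; 10]]; [:: [:: 0; 8; 5; 4; 6]; [:: 1; 8; 5; 4; 6]; [:: 2; 8; 5; 4; 6]; [:: 3; 8; 5; 4; 6]; [:: 4; 8; 5; 9; 7]; [:: ]; [:: ]; [:: 4; 5; 8; 7; 9]; [:: ]; [:: 4; 5; 8; 9; 7]; [:: 6; 4; 5; 8; 10]; [:: 6; 4; 5; 8; 11]; [:: 4; 5; 8; 12; 10]; [:: 4; 5; 8; 13; 10]; [:: 4; 5; 8; 14; 11]; [:: 4; 5; 8; 15; 11]]; [:: [:: 0; 9; 5; 4; 6]; [:: 1; 9; 5;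 4; 6]; [:: 2; 9; 5; 4; 6]; [:: 3; 9; 5; 4; 6]; [:: 4; 9; 5; 8; 6]; [:: ]; [:: 4; 5; 9; 6; 8]; [:: ]; [:: 4; 5; 8; 9; 7]; [:: ]; [:: 6; 4; 5; 9; 10]; [:: 6; 4; 5; 9; 11]; [:: 4; 5; 9; 12; 10]; [:: 4; 5; 9; 13; 10]; [:: 4; 5; 9; 14; 11]; [:: 4; 5; 9; 15; 11]]; [:: [:: 0; 10; 11; 14; 12]; [:: 0; 2; 3; 1; 10]; [:: 0; 1; 3; 2; 10]; [:: 0; 1; 2; 3; 10]; [:: 4; 10; 11; 14; 12]; [:: 5; 10; 11; 14; 12]; [:: 6; 4; 5; 9; 7]; [:: 6; 8; 5; 4; 7]; [:: 6; 4; 5; 8; 10]; [:: 6; 4; 5; 9; 10]; [:: ]; [:: ]; [:: ]; [:: ]; [:: 10; 14; 11; 15; 13]; [:: 10; 15; 11; 14; 12]]; [:: [:: 0; 11; 10; 12; 14]; [:: 0; 2; 3; 1; 11]; [:: 0; 1; 3; 2; 11]; [:: 0; 1; 2; 3; 11]; [:: 4; 11; 10; 12; 14]; [:: 5; 11; 10; 12; 14]; [:: 6; 4; 5; 9; 7]; [:: 6; 8; 5; 4; 7]; [:: 6; 4; 5; 8; 11]; [:: 6; 4; 5; 9; 11]; [:: ]; [:: ]; [:: 11; 12; 10; 13; 15]; [:: 11; 13; 10; 12; 14]; [:: ]; [:: ]]; [:: [:: 0; 12; 10; 11; 14]; [:: 1; 12; 10; 11; 14]; [:: 2; 12; 10;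 11; 14]; [:: 3; 12; 10; 11; 14]; [:: 4; 12; 10; 11; 14]; [:: 5; 12; 10; 11; 14]; [:: 4; 6; 12; 10; 11]; [:: 4; 7; 12; 10; 11]; [:: 4; 5; 8; 12; 10]; [:: 4; 5; 9; 12; 10]; [:: ]; [:: 11; 12; 10; 13; 15]; [:: ]; [:: 11; 10; 12; 13; 15]; [:: ]; [:: 10; 11; 15; 12; 14]]; [:: [:: 0; 13; 10; 11; 14]; [:: 1; 13; 10; 11; 14]; [:: 2; 13; 10; 11; 14]; [:: 3; 13; 10; 11; 14]; [:: 4; 13; 10; 11; 14]; [:: 5; 13; 10; 11; 14]; [:: 4; 6; 13; 10; 11]; [:: 4; 7; 13; 10; 11]; [:: 4; 5; 8; 13; 10]; [:: 4; 5; 9; 13; 10]; [:: ]; [:: 11; 13; 10; 12; 14]; [:: 11; 10; 12; 13; 15]; [:: ]; [:: 10; 11; 14; 13; 15]; [:: ]]; [:: [:: 0; 14; 11; 10; 12]; [:: 1; 14; 11; 10; 12]; [:: 2; 14; 11; 10; 12]; [:: 3; 14; 11; 10; 12]; [:: 4; 14; 11; 10; 12]; [:: 5; 14; 11; 10; 12]; [:: 4; 6; 14; 11; 10]; [:: 4; 7; 14; 11; 10]; [:: 4; 5; 8; 14; 11]; [:: 4; 5; 9; 14; 11]; [:: 10; 14; 11; 15; 13]; [:: ]; [:: ]; [:: 10; 11; 14; 13; 15]; [:: ]; [:: 10; 11; 14; 15; 13]]; [:: [:: 0; 15; 11; 10; 12]; [:: 1; 15; 11; 10; 12]; [:: 2;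 15; 11; 10; 12]; [:: 3; 15; 11; 10; 12]; [:: 4; 15; 11; 10; 12]; [:: 5; 15; 11; 10; 12]; [:: 4; 6; 15; 11; 10]; [:: 4; 7; 15; 11; 10]; [:: 4; 5; 8; 15; 11]; [:: 4; 5; 9; 15; 11]; [:: 10; 15; 11; 14; 12]; [:: ]; [:: 10; 11; 15; 12; 14]; [:: ]; [:: 10; 11; 14; 15; 13]; [:: ]]].
Definition W17 : seq (seq (seq nat)) := [:: [:: [:: ]; [:: ]; [:: ]; [:: ]; [:: ]; [:: 0; 5; 6; 9; 7]; [:: 0; 6; 5; 7; 9]; [:: 0; 7; 5; 6; 9]; [:: 0; 8; 5; 6; 9]; [:: 0; 9; 6; 5; 7]; [:: 0; 10; 6; 5; 7]; [:: 0; 11; 12; 15; 13]; [:: 0; 12; 11; 13; 15]; [:: 0; 13; 11; 12; 15]; [:: 0; 14; 11; 12; 15]; [:: 0; 15; 12; 11; 13]; [:: 0; 16; 12; 11; 13]]; [:: [:: ]; [:: ]; [:: ]; [:: ]; [:: ]; [:: 1; 5; 6; 9; 7]; [:: 1; 6; 5; 7; 9]; [:: 1; 7; 5; 6; 9]; [:: 1; 8; 5; 6; 9]; [:: 1; 9; 6; 5; 7]; [:: 1; 10; 6; 5; 7]; [:: 1; 11; 12; 15; 13]; [:: 1; 12; 11; 13; 15]; [:: 1; 13; 11; 12; 15]; [:: 1; 14; 11; 12; 15]; [:: 1; 15; 12; 11; 13]; [:: 1; 16; 12; 11; 13]]; [:: [:: ]; [:: ]; [:: ]; [:: ]; [:: ];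 [:: 2; 5; 6; 9; 7]; [:: 2; 6; 5; 7; 9]; [:: 2; 7; 5; 6; 9]; [:: 2; 8; 5; 6; 9]; [:: 2; 9; 6; 5; 7]; [:: 2; 10; 6; 5; 7]; [:: 2; 11; 12; 15; 13]; [:: 2; 12; 11; 13; 15]; [:: 2; 13; 11; 12; 15]; [:: 2; 14; 11; 12; 15]; [:: 2; 15; 12; 11; 13]; [:: 2; 16; 12; 11; 13]]; [:: [:: ]; [:: ]; [:: ]; [:: ]; [:: 0; 1; 2; 3; 4]; [:: 0; 1; 2; 3; 5]; [:: 0; 1; 2; 3; 6]; [:: 0; 1; 2; 3; 7]; [:: 0; 1; 2; 3; 8]; [:: 0; 1; 2; 3; 9]; [:: 0; 1; 2; 3; 10]; [:: 0; 1; 2; 3; 11]; [:: 0; 1; 2; 3; 12]; [:: 0; 1; 2; 3; 13]; [:: 0; 1; 2; 3; 14]; [:: 0; 1; 2; 3; 15]; [:: 0; 1; 2; 3; 16]]; [:: [:: ]; [:: ]; [:: ]; [:: 0; 1; 2; 3; 4]; [:: ]; [:: 0; 1; 2; 4; 5]; [:: 0; 1; 2; 4; 6]; [:: 0; 1; 2; 4; 7]; [:: 0; 1; 2; 4; 8]; [:: 0; 1; 2; 4; 9]; [:: 0; 1; 2; 4; 10]; [:: 0; 1; 2; 4; 11]; [:: 0; 1; 2; 4; 12]; [:: 0; 1; 2; 4; 13]; [:: 0; 1; 2; 4; 14]; [:: 0; 1; 2; 4; 15]; [:: 0; 1; 2; 4; 16]]; [:: [:: 0; 5; 6; 9; 7];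 [:: 1; 5; 6; 9; 7]; [:: 2; 5; 6; 9; 7]; [:: 0; 1; 2; 3; 5]; [:: 0; 1; 2; 4; 5]; [:: ]; [:: ]; [:: ]; [:: ]; [:: 5; 9; 6; 10; 8]; [:: 5; 10; 6; 9; 7]; [:: 5; 11; 12; 15; 13]; [:: 5; 12; 11; 13; 15]; [:: 5; 13; 11; 12; 15]; [:: 5; 14; 11; 12; 15]; [:: 5; 15; 12; 11; 13]; [:: 5; 16; 12; 11; 13]]; [:: [:: 0; 6; 5; 7; 9]; [:: 1; 6; 5; 7; 9]; [:: 2; 6; 5; 7; 9]; [:: 0; 1; 2; 3; 6]; [:: 0; 1; 2; 4; 6]; [:: ]; [:: ]; [:: 6; 7; 5; 8; 10]; [:: 6; 8; 5; 7; 9]; [:: ]; [:: ]; [:: 6; 11; 12; 15; 13]; [:: 6; 12; 11; 13; 15]; [:: 6; 13; 11; 12; 15]; [:: 6; 14; 11; 12; 15]; [:: 6; 15; 12; 11; 13]; [:: 6; 16; 12; 11; 13]]; [:: [:: 0; 7; 5; 6; 9]; [:: 1; 7; 5; 6; 9]; [:: 2; 7; 5; 6; 9]; [:: 0; 1; 2; 3; 7]; [:: 0; 1; 2; 4; 7]; [:: ]; [:: 6; 7; 5; 8; 10]; [:: ]; [:: 6; 5; 7; 8; 10]; [:: ]; [:: 5; 6; 10; 7; 9]; [:: 7; 5; 6; 10; 8]; [:: 7; 5; 6; 10; 8]; [:: 5; 7; 13; 11; 12]; [:: 5; 7; 14; 11; 12]; [:: 5; 7; 15; 12; 11]; [:: 5;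 7; 16; 12; 11]]; [:: [:: 0; 8; 5; 6; 9]; [:: 1; 8; 5; 6; 9]; [:: 2; 8; 5; 6; 9]; [:: 0; 1; 2; 3; 8]; [:: 0; 1; 2; 4; 8]; [:: ]; [:: 6; 8; 5; 7; 9]; [:: 6; 5; 7; 8; 10]; [:: ]; [:: 5; 6; 9; 8; 10]; [:: ]; [:: 7; 9; 6; 5; 8]; [:: 7; 9; 6; 5; 8]; [:: 5; 8; 13; 11; 12]; [:: 5; 8; 14; 11; 12]; [:: 5; 8; 15; 12; 11]; [:: 5; 8; 16; 12; 11]]; [:: [:: 0; 9; 6; 5; 7]; [:: 1; 9; 6; 5; 7]; [:: 2; 9; 6; 5; 7]; [:: 0; 1; 2; 3; 9]; [:: 0; 1; 2; 4; 9]; [:: 5; 9; 6; 10; 8]; [:: ]; [:: ]; [:: 5; 6; 9; 8; 10]; [:: ]; [:: 5; 6; 9; 10; 8]; [:: 7; 5; 6; 9; 11]; [:: 7; 5; 6; 9; 12]; [:: 5; 6; 9; 13; 11]; [:: 5; 6; 9; 14; 11]; [:: 5; 6; 9; 15; 12]; [:: 5; 6; 9; 16; 12]]; [:: [:: 0; 10; 6; 5; 7]; [:: 1; 10; 6; 5; 7]; [:: 2; 10; 6; 5; 7]; [:: 0; 1; 2; 3; 10]; [:: 0; 1; 2; 4; 10]; [:: 5; 10; 6; 9; 7]; [:: ]; [:: 5; 6; 10; 7; 9]; [:: ]; [:: 5; 6; 9; 10; 8]; [:: ]; [:: 7; 5; 6; 10; 11]; [:: 7; 5; 6; 10; 12];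 [:: 5; 6; 10; 13; 11]; [:: 5; 6; 10; 14; 11]; [:: 5; 6; 10; 15; 12]; [:: 5; 6; 10; 16; 12]]; [:: [:: 0; 11; 12; 15; 13]; [:: 1; 11; 12; 15; 13]; [:: 2; 11; 12; 15; 13]; [:: 0; 1; 2; 3; 11]; [:: 0; 1; 2; 4; 11]; [:: 5; 11; 12; 15; 13]; [:: 6; 11; 12; 15; 13]; [:: 7; 5; 6; 10; 8]; [:: 7; 9; 6; 5; 8]; [:: 7; 5; 6; 9; 11]; [:: 7; 5; 6; 10; 11]; [:: ]; [:: ]; [:: ]; [:: ]; [:: 11; 15; 12; 16; 14]; [:: 11; 16; 12; 15; 13]]; [:: [:: 0; 12; 11; 13; 15]; [:: 1; 12; 11; 13; 15]; [:: 2; 12; 11; 13; 15]; [:: 0; 1; 2; 3; 12]; [:: 0; 1; 2; 4; 12]; [:: 5; 12; 11; 13; 15]; [:: 6; 12; 11; 13; 15]; [:: 7; 5; 6; 10; 8]; [:: 7; 9; 6; 5; 8]; [:: 7; 5; 6; 9; 12]; [:: 7; 5; 6; 10; 12]; [:: ]; [:: ]; [:: 12; 13; 11; 14; 16]; [:: 12; 14; 11; 13; 15]; [:: ]; [:: ]]; [:: [:: 0; 13; 11; 12; 15]; [:: 1; 13; 11; 12; 15]; [:: 2; 13; 11; 12; 15]; [:: 0; 1; 2; 3; 13]; [:: 0; 1; 2; 4; 13]; [:: 5; 13; 11; 12; 15]; [:: 6; 13; 11; 12; 15]; [:: 5; 7; 13; 11; 12]; [:: 5; 8; 13; 11; 12];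 [:: 5; 6; 9; 13; 11]; [:: 5; 6; 10; 13; 11]; [:: ]; [:: 12; 13; 11; 14; 16]; [:: ]; [:: 12; 11; 13; 14; 16]; [:: ]; [:: 11; 12; 16; 13; 15]]; [:: [:: 0; 14; 11; 12; 15]; [:: 1; 14; 11; 12; 15]; [:: 2; 14; 11; 12; 15]; [:: 0; 1; 2; 3; 14]; [:: 0; 1; 2; 4; 14]; [:: 5; 14; 11; 12; 15]; [:: 6; 14; 11; 12; 15]; [:: 5; 7; 14; 11; 12]; [:: 5; 8; 14; 11; 12]; [:: 5; 6; 9; 14; 11]; [:: 5; 6; 10; 14; 11]; [:: ]; [:: 12; 14; 11; 13; 15]; [:: 12; 11; 13; 14; 16]; [:: ]; [:: 11; 12; 15; 14; 16]; [:: ]]; [:: [:: 0; 15; 12; 11; 13]; [:: 1; 15; 12; 11; 13]; [:: 2; 15; 12; 11; 13]; [:: 0; 1; 2; 3; 15]; [:: 0; 1; 2; 4; 15]; [:: 5; 15; 12; 11; 13]; [:: 6; 15; 12; 11; 13]; [:: 5; 7; 15; 12; 11]; [:: 5; 8; 15; 12; 11]; [:: 5; 6; 9; 15; 12]; [:: 5; 6; 10; 15; 12]; [:: 11; 15; 12; 16; 14]; [:: ]; [:: ]; [:: 11; 12; 15; 14; 16]; [:: ]; [:: 11; 12; 15; 16; 14]]; [:: [:: 0; 16; 12; 11; 13]; [:: 1; 16; 12; 11; 13]; [:: 2; 16; 12; 11; 13]; [:: 0; 1; 2; 3; 16]; [:: 0; 1; 2; 4; 16]; [:: 5; 16; 12;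 11; 13]; [:: 6; 16; 12; 11; 13]; [:: 5; 7; 16; 12; 11]; [:: 5; 8; 16; 12; 11]; [:: 5; 6; 9; 16; 12]; [:: 5; 6; 10; 16; 12]; [:: 11; 16; 12; 15; 13]; [:: ]; [:: 11; 12; 16; 13; 15]; [:: ]; [:: 11; 12; 15; 16; 14]; [:: ]]].
Definition W19 : seq (seq (seq nat)) := [:: [:: [:: ]; [:: ]; [:: ]; [:: ]; [:: 0; 4; 5; 6; 7]; [:: 0; 5; 4; 6; 7]; [:: 0; 6; 4; 5; 7]; [:: 0; 7; 4; 5; 6]; [:: 1; 2; 3; 0; 8]; [:: 1; 2; 3; 0; 9]; [:: 1; 2; 3; 0; 10]; [:: 0; 11; 8; 9; 10]; [:: 0; 12; 8; 9; 10]; [:: 0; 13; 14; 17; 15]; [:: 0; 14; 13; 15; 17]; [:: 0; 15; 13; 14; 17]; [:: 0; 16; 13; 14; 17]; [:: 0; 17; 14; 13; 15]; [:: 0; 18; 14; 13; 15]]; [:: [:: ]; [:: ]; [:: ]; [:: ]; [:: 0; 2; 3; 1; 4]; [:: 0; 2; 3; 1; 5]; [:: 0; 2; 3; 1; 6]; [:: 0; 2; 3; 1; 7]; [:: 0; 2; 3; 1; 8]; [:: 0; 2; 3; 1; 9]; [:: 0; 2; 3; 1; 10]; [:: 0; 1; 11; 8; 9]; [:: 0; 1; 12; 8; 9]; [:: 0; 2; 3; 1; 13]; [:: 0; 2; 3; 1; 14]; [:: 1; 15; 13; 14; 17]; [:: 1; 16; 13; 14; 17]; [:: 1; 17; 14;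 13; 15]; [:: 1; 18; 14; 13; 15]]; [:: [:: ]; [:: ]; [:: ]; [:: ]; [:: 0; 1; 3; 2; 4]; [:: 0; 1; 3; 2; 5]; [:: 0; 1; 3; 2; 6]; [:: 0; 1; 3; 2; 7]; [:: 0; 1; 3; 2; 8]; [:: 0; 1; 3; 2; 9]; [:: 0; 1; 3; 2; 10]; [:: 0; 1; 2; 11; 8]; [:: 0; 1; 2; 12; 8]; [:: 0; 1; 3; 2; 13]; [:: 0; 1; 3; 2; 14]; [:: 2; 15; 13; 14; 17]; [:: 2; 16; 13; 14; 17]; [:: 2; 17; 14; 13; 15]; [:: 2; 18; 14; 13; 15]]; [:: [:: ]; [:: ]; [:: ]; [:: ]; [:: 0; 1; 2; 3; 4]; [:: 0; 1; 2; 3; 5]; [:: 0; 1; 2; 3; 6]; [:: 0; 1; 2; 3; 7]; [:: 0; 1; 2; 3; 8]; [:: 0; 1; 2; 3; 9]; [:: 0; 1; 2; 3; 10]; [:: 0; 1; 2; 3; 11]; [:: 0; 1; 2; 3; 12]; [:: 0; 1; 2; 3; 13]; [:: 0; 1; 2; 3; 14]; [:: 3; 15; 13; 14; 17]; [:: 3; 16; 13; 14; 17]; [:: 3; 17; 14; 13; 15]; [:: 3; 18; 14; 13; 15]]; [:: [:: 0; 4; 5; 6; 7]; [:: 0; 2; 3; 1; 4]; [:: 0; 1; 3; 2; 4]; [:: 0; 1; 2; 3; 4]; [:: ]; [:: ]; [:: ]; [:: ]; [:: 5; 6; 7; 4; 8]; [:: 5; 6; 7; 4; 9]; [:: 5;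 6; 7; 4; 10]; [:: 4; 11; 8; 9; 10]; [:: 4; 12; 8; 9; 10]; [:: 4; 13; 14; 17; 15]; [:: 4; 14; 13; 15; 17]; [:: 4; 15; 13; 14; 17]; [:: 4; 16; 13; 14; 17]; [:: 4; 17; 14; 13; 15]; [:: 4; 18; 14; 13; 15]]; [:: [:: 0; 5; 4; 6; 7]; [:: 0; 2; 3; 1; 5]; [:: 0; 1; 3; 2; 5]; [:: 0; 1; 2; 3; 5]; [:: ]; [:: ]; [:: ]; [:: ]; [:: 4; 6; 7; 5; 8]; [:: 4; 6; 7; 5; 9]; [:: 4; 6; 7; 5; 10]; [:: 4; 5; 11; 8; 9]; [:: 4; 5; 12; 8; 9]; [:: 4; 6; 7; 5; 13]; [:: 4; 6; 7; 5; 14]; [:: 5; 15; 13; 14; 17]; [:: 5; 16; 13; 14; 17]; [:: 5; 17; 14; 13; 15]; [:: 5; 18; 14; 13; 15]]; [:: [:: 0; 6; 4; 5; 7]; [:: 0; 2; 3; 1; 6]; [:: 0; 1; 3; 2; 6]; [:: 0; 1; 2; 3; 6]; [:: ]; [:: ]; [:: ]; [:: ]; [:: 4; 5; 7; 6; 8]; [:: 4; 5; 7; 6; 9]; [:: 4; 5; 7; 6; 10]; [:: 4; 5; 6; 11; 8]; [:: 4; 5; 6; 12; 8]; [:: 4; 5; 7; 6; 13]; [:: 4; 5; 7; 6; 14]; [:: 6; 15; 13; 14; 17]; [:: 6; 16; 13; 14; 17]; [:: 6; 17; 14; 13; 15]; [:: 6; 18; 14; 13; 15]]; [:: [:: 0;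 7; 4; 5; 6]; [:: 0; 2; 3; 1; 7]; [:: 0; 1; 3; 2; 7]; [:: 0; 1; 2; 3; 7]; [:: ]; [:: ]; [:: ]; [:: ]; [:: 4; 5; 6; 7; 8]; [:: 4; 5; 6; 7; 9]; [:: 4; 5; 6; 7; 10]; [:: 4; 5; 6; 7; 11]; [:: 4; 5; 6; 7; 12]; [:: 4; 5; 6; 7; 13]; [:: 4; 5; 6; 7; 14]; [:: 7; 15; 13; 14; 17]; [:: 7; 16; 13; 14; 17]; [:: 7; 17; 14; 13; 15]; [:: 7; 18; 14; 13; 15]]; [:: [:: 1; 2; 3; 0; 8]; [:: 0; 2; 3; 1; 8]; [:: 0; 1; 3; 2; 8]; [:: 0; 1; 2; 3; 8]; [:: 5; 6; 7; 4; 8]; [:: 4; 6; 7; 5; 8]; [:: 4; 5; 7; 6; 8]; [:: 4; 5; 6; 7; 8]; [:: ]; [:: ]; [:: ]; [:: ]; [:: ]; [:: 8; 13; 14; 17; 15]; [:: 8; 14; 13; 15; 17]; [:: 8; 15; 13; 14; 17]; [:: 8; 16; 13; 14; 17]; [:: 8; 17; 14; 13; 15]; [:: 8; 18; 14; 13; 15]]; [:: [:: 1; 2; 3; 0; 9]; [:: 0; 2; 3; 1; 9]; [:: 0; 1; 3; 2; 9]; [:: 0; 1; 2; 3; 9]; [:: 5; 6; 7; 4; 9]; [:: 4; 6; 7; 5; 9]; [:: 4; 5; 7; 6; 9]; [:: 4; 5; 6; 7; 9]; [:: ]; [:: ]; [:: ]; [:: ]; [:: ]; [:: 9; 13; 14;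 17; 15]; [:: 9; 14; 13; 15; 17]; [:: 9; 15; 13; 14; 17]; [:: 9; 16; 13; 14; 17]; [:: 9; 17; 14; 13; 15]; [:: 9; 18; 14; 13; 15]]; [:: [:: 1; 2; 3; 0; 10]; [:: 0; 2; 3; 1; 10]; [:: 0; 1; 3; 2; 10]; [:: 0; 1; 2; 3; 10]; [:: 5; 6; 7; 4; 10]; [:: 4; 6; 7; 5; 10]; [:: 4; 5; 7; 6; 10]; [:: 4; 5; 6; 7; 10]; [:: ]; [:: ]; [:: ]; [:: ]; [:: ]; [:: 10; 13; 14; 17; 15]; [:: 10; 14; 13; 15; 17]; [:: 10; 15; 13; 14; 17]; [:: 10; 16; 13; 14; 17]; [:: 10; 17; 14; 13; 15]; [:: 10; 18; 14; 13; 15]]; [:: [:: 0; 11; 8; 9; 10]; [:: 0; 1; 11; 8; 9]; [:: 0; 1; 2; 11; 8]; [:: 0; 1; 2; 3; 11]; [:: 4; 11; 8; 9; 10]; [:: 4; 5; 11; 8; 9]; [:: 4; 5; 6; 11; 8]; [:: 4; 5; 6; 7; 11]; [:: ]; [:: ]; [:: ]; [:: ]; [:: 8; 9; 10; 11; 12]; [:: 8; 9; 10; 11; 13]; [:: 8; 9; 10; 11; 14]; [:: 8; 9; 10; 11; 15]; [:: 8; 9; 10; 11; 16]; [:: 8; 9; 10; 11; 17]; [:: 8; 9; 10; 11; 18]]; [:: [:: 0; 12; 8; 9; 10]; [:: 0; 1; 12; 8; 9]; [:: 0; 1; 2; 12; 8]; [:: 0; 1; 2; 3; 12]; [:: 4;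 12; 8; 9; 10]; [:: 4; 5; 12; 8; 9]; [:: 4; 5; 6; 12; 8]; [:: 4; 5; 6; 7; 12]; [:: ]; [:: ]; [:: ]; [:: 8; 9; 10; 11; 12]; [:: ]; [:: 8; 9; 10; 12; 13]; [:: 8; 9; 10; 12; 14]; [:: 8; 9; 10; 12; 15]; [:: 8; 9; 10; 12; 16]; [:: 8; 9; 10; 12; 17]; [:: 8; 9; 10; 12; 18]]; [:: [:: 0; 13; 14; 17; 15]; [:: 0; 2; 3; 1; 13]; [:: 0; 1; 3; 2; 13]; [:: 0; 1; 2; 3; 13]; [:: 4; 13; 14; 17; 15]; [:: 4; 6; 7; 5; 13]; [:: 4; 5; 7; 6; 13]; [:: 4; 5; 6; 7; 13]; [:: 8; 13; 14; 17; 15]; [:: 9; 13; 14; 17; 15]; [:: 10; 13; 14; 17; 15]; [:: 8; 9; 10; 11; 13]; [:: 8; 9; 10; 12; 13]; [:: ]; [:: ]; [:: ]; [:: ]; [:: 13; 17; 14; 18; 16]; [:: 13; 18; 14; 17; 15]]; [:: [:: 0; 14; 13; 15; 17]; [:: 0; 2; 3; 1; 14]; [:: 0; 1; 3; 2; 14]; [:: 0; 1; 2; 3; 14]; [:: 4; 14; 13; 15; 17]; [:: 4; 6; 7; 5; 14]; [:: 4; 5; 7; 6; 14]; [:: 4; 5; 6; 7; 14]; [:: 8; 14; 13; 15; 17]; [:: 9; 14; 13; 15; 17]; [:: 10; 14; 13; 15; 17]; [:: 8; 9; 10; 11; 14]; [:: 8; 9; 10; 12; 14]; [:: ]; [:: ];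 [:: 14; 15; 13; 16; 18]; [:: 14; 16; 13; 15; 17]; [:: ]; [:: ]]; [:: [:: 0; 15; 13; 14; 17]; [:: 1; 15; 13; 14; 17]; [:: 2; 15; 13; 14; 17]; [:: 3; 15; 13; 14; 17]; [:: 4; 15; 13; 14; 17]; [:: 5; 15; 13; 14; 17]; [:: 6; 15; 13; 14; 17]; [:: 7; 15; 13; 14; 17]; [:: 8; 15; 13; 14; 17]; [:: 9; 15; 13; 14; 17]; [:: 10; 15; 13; 14; 17]; [:: 8; 9; 10; 11; 15]; [:: 8; 9; 10; 12; 15]; [:: ]; [:: 14; 15; 13; 16; 18]; [:: ]; [:: 14; 13; 15; 16; 18]; [:: ]; [:: 13; 14; 18; 15; 17]]; [:: [:: 0; 16; 13; 14; 17]; [:: 1; 16; 13; 14; 17]; [:: 2; 16; 13; 14; 17]; [:: 3; 16; 13; 14; 17]; [:: 4; 16; 13; 14; 17]; [:: 5; 16; 13; 14; 17]; [:: 6; 16; 13; 14; 17]; [:: 7; 16; 13; 14; 17]; [:: 8; 16; 13; 14; 17]; [:: 9; 16; 13; 14; 17]; [:: 10; 16; 13; 14; 17]; [:: 8; 9; 10; 11; 16]; [:: 8; 9; 10; 12; 16]; [:: ]; [:: 14; 16; 13; 15; 17]; [:: 14; 13; 15; 16; 18]; [:: ]; [:: 13; 14; 17; 16; 18]; [:: ]]; [:: [:: 0; 17; 14; 13; 15]; [:: 1; 17; 14; 13; 15]; [:: 2; 17; 14; 13; 15]; [:: 3; 17; 14; 13; 15]; [:: 4; 17; 14; 13; 15];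 [:: 5; 17; 14; 13; 15]; [:: 6; 17; 14; 13; 15]; [:: 7; 17; 14; 13; 15]; [:: 8; 17; 14; 13; 15]; [:: 9; 17; 14; 13; 15]; [:: 10; 17; 14; 13; 15]; [:: 8; 9; 10; 11; 17]; [:: 8; 9; 10; 12; 17]; [:: 13; 17; 14; 18; 16]; [:: ]; [:: ]; [:: 13; 14; 17; 16; 18]; [:: ]; [:: 13; 14; 17; 18; 16]]; [:: [:: 0; 18; 14; 13; 15]; [:: 1; 18; 14; 13; 15]; [:: 2; 18; 14; 13; 15]; [:: 3; 18; 14; 13; 15]; [:: 4; 18; 14; 13; 15]; [:: 5; 18; 14; 13; 15]; [:: 6; 18; 14; 13; 15]; [:: 7; 18; 14; 13; 15]; [:: 8; 18; 14; 13; 15]; [:: 9; 18; 14; 13; 15]; [:: 10; 18; 14; 13; 15]; [:: 8; 9; 10; 11; 18]; [:: 8; 9; 10; 12; 18]; [:: 13; 18; 14; 17; 15]; [:: ]; [:: 13; 14; 18; 15; 17]; [:: ]; [:: 13; 14; 17; 18; 16]; [:: ]]].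
Definition W20 : seq (seq (seq nat)) := [:: [:: [:: ]; [:: ]; [:: ]; [:: ]; [:: 0; 4; 5; 6; 7]; [:: 0; 5; 4; 6; 7]; [:: 0; 6; 4; 5; 7]; [:: 0; 7; 4; 5; 6]; [:: 0; 8; 9; 12; 10]; [:: 0; 9; 8; 10; 12]; [:: 0; 10; 8; 9; 12]; [:: 0; 11; 8; 9; 12]; [:: 0; 12; 9; 8; 10]; [:: 0; 13; 9; 8; 10]; [:: 0; 14; 15; 18; 16]; [:: 0; 15; 14; 16; 18]; [:: 0; 16; 14; 15; 18]; [:: 0; 17; 14; 15; 18]; [:: 0; 18; 15; 14; 16]; [:: 0; 19; 15; 14; 16]]; [:: [:: ]; [:: ]; [:: ]; [:: ]; [:: 0; 2; 3; 1; 4]; [:: 0; 2; 3; 1; 5]; [:: 0; 2; 3; 1; 6]; [:: 0; 2; 3; 1; 7]; [:: 0; 2; 3; 1; 8]; [:: 0; 2; 3; 1; 9]; [:: 1; 10; 8; 9; 12]; [:: 1; 11; 8; 9; 12]; [:: 1; 12; 9; 8; 10]; [:: 1; 13; 9; 8; 10]; [:: 0; 2; 3; 1; 14]; [:: 0; 2; 3; 1; 15]; [:: 1; 16; 14; 15; 18]; [:: 1; 17; 14; 15; 18]; [:: 1; 18; 15; 14; 16]; [:: 1; 19; 15; 14; 16]]; [:: [:: ]; [:: ]; [:: ]; [:: ]; [:: 0; 1; 3; 2; 4]; [:: 0; 1; 3; 2; 5]; [:: 0; 1; 3; 2; 6]; [:: 0; 1; 3; 2; 7]; [:: 0; 1;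 3; 2; 8]; [:: 0; 1; 3; 2; 9]; [:: 2; 10; 8; 9; 12]; [:: 2; 11; 8; 9; 12]; [:: 2; 12; 9; 8; 10]; [:: 2; 13; 9; 8; 10]; [:: 0; 1; 3; 2; 14]; [:: 0; 1; 3; 2; 15]; [:: 2; 16; 14; 15; 18]; [:: 2; 17; 14; 15; 18]; [:: 2; 18; 15; 14; 16]; [:: 2; 19; 15; 14; 16]]; [:: [:: ]; [:: ]; [:: ]; [:: ]; [:: 0; 1; 2; 3; 4]; [:: 0; 1; 2; 3; 5]; [:: 0; 1; 2; 3; 6]; [:: 0; 1; 2; 3; 7]; [:: 0; 1; 2; 3; 8]; [:: 0; 1; 2; 3; 9]; [:: 3; 10; 8; 9; 12]; [:: 3; 11; 8; 9; 12]; [:: 3; 12; 9; 8; 10]; [:: 3; 13; 9; 8; 10]; [:: 0; 1; 2; 3; 14]; [:: 0; 1; 2; 3; 15]; [:: 3; 16; 14; 15; 18]; [:: 3; 17; 14; 15; 18]; [:: 3; 18; 15; 14; 16]; [:: 3; 19; 15; 14; 16]]; [:: [:: 0; 4; 5; 6; 7]; [:: 0; 2; 3; 1; 4]; [:: 0; 1; 3; 2; 4]; [:: 0; 1; 2; 3; 4]; [:: ]; [:: ]; [:: ]; [:: ]; [:: 4; 8; 9; 12; 10]; [:: 4; 9; 8; 10; 12]; [:: 4; 10; 8; 9; 12]; [:: 4; 11; 8; 9; 12]; [:: 4; 12; 9; 8; 10]; [:: 4; 13; 9; 8; 10]; [:: 4; 14; 15; 18; 16]; [:: 4; 15; 14;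 16; 18]; [:: 4; 16; 14; 15; 18]; [:: 4; 17; 14; 15; 18]; [:: 4; 18; 15; 14; 16]; [:: 4; 19; 15; 14; 16]]; [:: [:: 0; 5; 4; 6; 7]; [:: 0; 2; 3; 1; 5]; [:: 0; 1; 3; 2; 5]; [:: 0; 1; 2; 3; 5]; [:: ]; [:: ]; [:: ]; [:: ]; [:: 4; 6; 7; 5; 8]; [:: 4; 6; 7; 5; 9]; [:: 5; 10; 8; 9; 12]; [:: 5; 11; 8; 9; 12]; [:: 5; 12; 9; 8; 10]; [:: 5; 13; 9; 8; 10]; [:: 4; 6; 7; 5; 14]; [:: 4; 6; 7; 5; 15]; [:: 5; 16; 14; 15; 18]; [:: 5; 17; 14; 15; 18]; [:: 5; 18; 15; 14; 16]; [:: 5; 19; 15; 14; 16]]; [:: [:: 0; 6; 4; 5; 7]; [:: 0; 2; 3; 1; 6]; [:: 0; 1; 3; 2; 6]; [:: 0; 1; 2; 3; 6]; [:: ]; [:: ]; [:: ]; [:: ]; [:: 4; 5; 7; 6; 8]; [:: 4; 5; 7; 6; 9]; [:: 6; 10; 8; 9; 12]; [:: 6; 11; 8; 9; 12]; [:: 6; 12; 9; 8; 10]; [:: 6; 13; 9; 8; 10]; [:: 4; 5; 7; 6; 14]; [:: 4; 5; 7; 6; 15]; [:: 6; 16; 14; 15; 18]; [:: 6; 17; 14; 15; 18]; [:: 6; 18; 15; 14; 16]; [:: 6; 19; 15; 14; 16]]; [:: [:: 0; 7; 4; 5; 6]; [:: 0; 2; 3; 1; 7]; [:: 0; 1; 3;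 2; 7]; [:: 0; 1; 2; 3; 7]; [:: ]; [:: ]; [:: ]; [:: ]; [:: 4; 5; 6; 7; 8]; [:: 4; 5; 6; 7; 9]; [:: 7; 10; 8; 9; 12]; [:: 7; 11; 8; 9; 12]; [:: 7; 12; 9; 8; 10]; [:: 7; 13; 9; 8; 10]; [:: 4; 5; 6; 7; 14]; [:: 4; 5; 6; 7; 15]; [:: 7; 16; 14; 15; 18]; [:: 7; 17; 14; 15; 18]; [:: 7; 18; 15; 14; 16]; [:: 7; 19; 15; 14; 16]]; [:: [:: 0; 8; 9; 12; 10]; [:: 0; 2; 3; 1; 8]; [:: 0; 1; 3; 2; 8]; [:: 0; 1; 2; 3; 8]; [:: 4; 8; 9; 12; 10]; [:: 4; 6; 7; 5; 8]; [:: 4; 5; 7; 6; 8]; [:: 4; 5; 6; 7; 8]; [:: ]; [:: ]; [:: ]; [:: ]; [:: 8; 12; 9; 13; 11]; [:: 8; 13; 9; 12; 10]; [:: 8; 14; 15; 18; 16]; [:: 8; 15; 14; 16; 18]; [:: 8; 16; 14; 15; 18]; [:: 8; 17; 14; 15; 18]; [:: 8; 18; 15; 14; 16]; [:: 8; 19; 15; 14; 16]]; [:: [:: 0; 9; 8; 10; 12]; [:: 0; 2; 3; 1; 9]; [:: 0; 1; 3; 2; 9]; [:: 0; 1; 2; 3; 9]; [:: 4; 9; 8; 10; 12]; [:: 4; 6; 7; 5; 9]; [:: 4; 5; 7; 6; 9]; [:: 4; 5; 6; 7; 9]; [:: ]; [:: ]; [:: 9; 10; 8; 11; 13]; [:: 9;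 11; 8; 10; 12]; [:: ]; [:: ]; [:: 9; 14; 15; 18; 16]; [:: 9; 15; 14; 16; 18]; [:: 9; 16; 14; 15; 18]; [:: 9; 17; 14; 15; 18]; [:: 9; 18; 15; 14; 16]; [:: 9; 19; 15; 14; 16]]; [:: [:: 0; 10; 8; 9; 12]; [:: 1; 10; 8; 9; 12]; [:: 2; 10; 8; 9; 12]; [:: 3; 10; 8; 9; 12]; [:: 4; 10; 8; 9; 12]; [:: 5; 10; 8; 9; 12]; [:: 6; 10; 8; 9; 12]; [:: 7; 10; 8; 9; 12]; [:: ]; [:: 9; 10; 8; 11; 13]; [:: ]; [:: 9; 8; 10; 11; 13]; [:: ]; [:: 8; 9; 13; 10; 12]; [:: 10; 8; 9; 13; 11]; [:: 10; 8; 9; 13; 11]; [:: 8; 10; 16; 14; 15]; [:: 8; 10; 17; 14; 15]; [:: 8; 10; 18; 15; 14]; [:: 8; 10; 19; 15; 14]]; [:: [:: 0; 11; 8; 9; 12]; [:: 1; 11; 8; 9; 12]; [:: 2; 11; 8; 9; 12]; [:: 3; 11; 8; 9; 12]; [:: 4; 11; 8; 9; 12]; [:: 5; 11; 8; 9; 12]; [:: 6; 11; 8; 9; 12]; [:: 7; 11; 8; 9; 12]; [:: ]; [:: 9; 11; 8; 10; 12]; [:: 9; 8; 10; 11; 13]; [:: ]; [:: 8; 9; 12; 11; 13]; [:: ]; [:: 10; 12; 9; 8; 11]; [:: 10; 12; 9; 8; 11]; [:: 8; 11; 16; 14; 15]; [:: 8; 11; 17; 14; 15]; [:: 8; 11;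 18; 15; 14]; [:: 8; 11; 19; 15; 14]]; [:: [:: 0; 12; 9; 8; 10]; [:: 1; 12; 9; 8; 10]; [:: 2; 12; 9; 8; 10]; [:: 3; 12; 9; 8; 10]; [:: 4; 12; 9; 8; 10]; [:: 5; 12; 9; 8; 10]; [:: 6; 12; 9; 8; 10]; [:: 7; 12; 9; 8; 10]; [:: 8; 12; 9; 13; 11]; [:: ]; [:: ]; [:: 8; 9; 12; 11; 13]; [:: ]; [:: 8; 9; 12; 13; 11]; [:: 10; 8; 9; 12; 14]; [:: 10; 8; 9; 12; 15]; [:: 8; 9; 12; 16; 14]; [:: 8; 9; 12; 17; 14]; [:: 8; 9; 12; 18; 15]; [:: 8; 9; 12; 19; 15]]; [:: [:: 0; 13; 9; 8; 10]; [:: 1; 13; 9; 8; 10]; [:: 2; 13; 9; 8; 10]; [:: 3; 13; 9; 8; 10]; [:: 4; 13; 9; 8; 10]; [:: 5; 13; 9; 8; 10]; [:: 6; 13; 9; 8; 10]; [:: 7; 13; 9; 8; 10]; [:: 8; 13; 9; 12; 10]; [:: ]; [:: 8; 9; 13; 10; 12]; [:: ]; [:: 8; 9; 12; 13; 11]; [:: ]; [:: 10; 8; 9; 13; 14]; [:: 10; 8; 9; 13; 15]; [:: 8; 9; 13; 16; 14]; [:: 8; 9; 13; 17; 14]; [:: 8; 9; 13; 18; 15]; [:: 8; 9; 13; 19; 15]]; [:: [:: 0; 14; 15; 18; 16]; [:: 0; 2; 3; 1; 14]; [:: 0; 1; 3; 2; 14]; [:: 0; 1; 2; 3; 14]; [::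 4; 14; 15; 18; 16]; [:: 4; 6; 7; 5; 14]; [:: 4; 5; 7; 6; 14]; [:: 4; 5; 6; 7; 14]; [:: 8; 14; 15; 18; 16]; [:: 9; 14; 15; 18; 16]; [:: 10; 8; 9; 13; 11]; [:: 10; 12; 9; 8; 11]; [:: 10; 8; 9; 12; 14]; [:: 10; 8; 9; 13; 14]; [:: ]; [:: ]; [:: ]; [:: ]; [:: 14; 18; 15; 19; 17]; [:: 14; 19; 15; 18; 16]]; [:: [:: 0; 15; 14; 16; 18]; [:: 0; 2; 3; 1; 15]; [:: 0; 1; 3; 2; 15]; [:: 0; 1; 2; 3; 15]; [:: 4; 15; 14; 16; 18]; [:: 4; 6; 7; 5; 15]; [:: 4; 5; 7; 6; 15]; [:: 4; 5; 6; 7; 15]; [:: 8; 15; 14; 16; 18]; [:: 9; 15; 14; 16; 18]; [:: 10; 8; 9; 13; 11]; [:: 10; 12; 9; 8; 11]; [:: 10; 8; 9; 12; 15]; [:: 10; 8; 9; 13; 15]; [:: ]; [:: ]; [:: 15; 16; 14; 17; 19]; [:: 15; 17; 14; 16; 18]; [:: ]; [:: ]]; [:: [:: 0; 16; 14; 15; 18]; [:: 1; 16; 14; 15; 18]; [:: 2; 16; 14; 15; 18]; [:: 3; 16; 14; 15; 18]; [:: 4; 16; 14; 15; 18]; [:: 5; 16; 14; 15; 18]; [:: 6; 16; 14; 15; 18]; [:: 7; 16; 14; 15; 18]; [:: 8; 16; 14; 15; 18]; [:: 9; 16; 14; 15; 18]; [:: 8; 10; 16; 14; 15]; [:: 8;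 11; 16; 14; 15]; [:: 8; 9; 12; 16; 14]; [:: 8; 9; 13; 16; 14]; [:: ]; [:: 15; 16; 14; 17; 19]; [:: ]; [:: 15; 14; 16; 17; 19]; [:: ]; [:: 14; 15; 19; 16; 18]]; [:: [:: 0; 17; 14; 15; 18]; [:: 1; 17; 14; 15; 18]; [:: 2; 17; 14; 15; 18]; [:: 3; 17; 14; 15; 18]; [:: 4; 17; 14; 15; 18]; [:: 5; 17; 14; 15; 18]; [:: 6; 17; 14; 15; 18]; [:: 7; 17; 14; 15; 18]; [:: 8; 17; 14; 15; 18]; [:: 9; 17; 14; 15; 18]; [:: 8; 10; 17; 14; 15]; [:: 8; 11; 17; 14; 15]; [:: 8; 9; 12; 17; 14]; [:: 8; 9; 13; 17; 14]; [:: ]; [:: 15; 17; 14; 16; 18]; [:: 15; 14; 16; 17; 19]; [:: ]; [:: 14; 15; 18; 17; 19]; [:: ]]; [:: [:: 0; 18; 15; 14; 16]; [:: 1; 18; 15; 14; 16]; [:: 2; 18; 15; 14; 16]; [:: 3; 18; 15; 14; 16]; [:: 4; 18; 15; 14; 16]; [:: 5; 18; 15; 14; 16]; [:: 6; 18; 15; 14; 16]; [:: 7; 18; 15; 14; 16]; [:: 8; 18; 15; 14; 16]; [:: 9; 18; 15; 14; 16]; [:: 8; 10; 18; 15; 14]; [:: 8; 11; 18; 15; 14]; [:: 8; 9; 12; 18; 15]; [:: 8; 9; 13; 18; 15]; [:: 14; 18; 15; 19; 17]; [:: ]; [:: ]; [:: 14; 15; 18; 17; 19]; [:: ]; [:: 14;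 15; 18; 19; 17]]; [:: [:: 0; 19; 15; 14; 16]; [:: 1; 19; 15; 14; 16]; [:: 2; 19; 15; 14; 16]; [:: 3; 19; 15; 14; 16]; [:: 4; 19; 15; 14; 16]; [:: 5; 19; 15; 14; 16]; [:: 6; 19; 15; 14; 16]; [:: 7; 19; 15; 14; 16]; [:: 8; 19; 15; 14; 16]; [:: 9; 19; 15; 14; 16]; [:: 8; 10; 19; 15; 14]; [:: 8; 11; 19; 15; 14]; [:: 8; 9; 12; 19; 15]; [:: 8; 9; 13; 19; 15]; [:: 14; 19; 15; 18; 16]; [:: ]; [:: 14; 15; 19; 16; 18]; [:: ]; [:: 14; 15; 18; 19; 17]; [:: ]]].
Definition W21 : seq (seq (seq nat)) := [:: [:: [:: ]; [:: ]; [:: ]; [:: ]; [:: 1; 2; 3; 0; 4]; [:: 1; 2; 3; 0; 5]; [:: 1; 2; 3; 0; 6]; [:: 0; 7; 4; 5; 6]; [:: 0; 8; 4; 5; 6]; [:: 0; 9; 10; 13; 11]; [:: 0; 10; 9; 11; 13]; [:: 0; 11; 9; 10; 13]; [:: 0; 12; 9; 10; 13]; [:: 0; 13; 10; 9; 11]; [:: 0; 14; 10; 9; 11]; [:: 0; 15; 16; 19; 17]; [:: 0; 16; 15; 17; 19]; [:: 0; 17; 15; 16; 19]; [:: 0; 18; 15; 16; 19]; [:: 0; 19; 16; 15; 17]; [:: 0; 20; 16; 15; 17]]; [:: [:: ]; [:: ]; [:: ]; [:: ]; [:: 0; 2; 3; 1; 4]; [:: 0; 2; 3; 1; 5]; [::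 0; 2; 3; 1; 6]; [:: 0; 1; 7; 4; 5]; [:: 0; 1; 8; 4; 5]; [:: 0; 2; 3; 1; 9]; [:: 0; 2; 3; 1; 10]; [:: 1; 11; 9; 10; 13]; [:: 1; 12; 9; 10; 13]; [:: 1; 13; 10; 9; 11]; [:: 1; 14; 10; 9; 11]; [:: 0; 2; 3; 1; 15]; [:: 0; 2; 3; 1; 16]; [:: 1; 17; 15; 16; 19]; [:: 1; 18; 15; 16; 19]; [:: 1; 19; 16; 15; 17]; [:: 1; 20; 16; 15; 17]]; [:: [:: ]; [:: ]; [:: ]; [:: ]; [:: 0; 1; 3; 2; 4]; [:: 0; 1; 3; 2; 5]; [:: 0; 1; 3; 2; 6]; [:: 0; 1; 2; 7; 4]; [:: 0; 1; 2; 8; 4]; [:: 0; 1; 3; 2; 9]; [:: 0; 1; 3; 2; 10]; [:: 2; 11; 9; 10; 13]; [:: 2; 12; 9; 10; 13]; [:: 2; 13; 10; 9; 11]; [:: 2; 14; 10; 9; 11]; [:: 0; 1; 3; 2; 15]; [:: 0; 1; 3; 2; 16]; [:: 2; 17; 15; 16; 19]; [:: 2; 18; 15; 16; 19]; [:: 2; 19; 16; 15; 17]; [:: 2; 20; 16; 15; 17]]; [:: [:: ]; [:: ]; [:: ]; [:: ]; [:: 0; 1; 2; 3; 4]; [:: 0; 1; 2; 3; 5]; [:: 0; 1; 2; 3; 6]; [:: 0; 1; 2; 3; 7]; [:: 0; 1; 2; 3; 8]; [:: 0; 1; 2; 3; 9]; [:: 0; 1; 2; 3; 10]; [:: 3;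 11; 9; 10; 13]; [:: 3; 12; 9; 10; 13]; [:: 3; 13; 10; 9; 11]; [:: 3; 14; 10; 9; 11]; [:: 0; 1; 2; 3; 15]; [:: 0; 1; 2; 3; 16]; [:: 3; 17; 15; 16; 19]; [:: 3; 18; 15; 16; 19]; [:: 3; 19; 16; 15; 17]; [:: 3; 20; 16; 15; 17]]; [:: [:: 1; 2; 3; 0; 4]; [:: 0; 2; 3; 1; 4]; [:: 0; 1; 3; 2; 4]; [:: 0; 1; 2; 3; 4]; [:: ]; [:: ]; [:: ]; [:: ]; [:: ]; [:: 4; 9; 10; 13; 11]; [:: 4; 10; 9; 11; 13]; [:: 4; 11; 9; 10; 13]; [:: 4; 12; 9; 10; 13]; [:: 4; 13; 10; 9; 11]; [:: 4; 14; 10; 9; 11]; [:: 4; 15; 16; 19; 17]; [:: 4; 16; 15; 17; 19]; [:: 4; 17; 15; 16; 19]; [:: 4; 18; 15; 16; 19]; [:: 4; 19; 16; 15; 17]; [:: 4; 20; 16; 15; 17]]; [:: [:: 1; 2; 3; 0; 5]; [:: 0; 2; 3; 1; 5]; [:: 0; 1; 3; 2; 5]; [:: 0; 1; 2; 3; 5]; [:: ]; [:: ]; [:: ]; [:: ]; [:: ]; [:: 5; 9; 10; 13; 11]; [:: 5; 10; 9; 11; 13]; [:: 5; 11; 9; 10; 13]; [:: 5; 12; 9; 10; 13]; [:: 5; 13; 10; 9; 11]; [:: 5; 14; 10; 9; 11]; [:: 5; 15; 16; 19; 17]; [:: 5; 16; 15; 17; 19]; [:: 5; 17; 15; 16; 19];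 [:: 5; 18; 15; 16; 19]; [:: 5; 19; 16; 15; 17]; [:: 5; 20; 16; 15; 17]]; [:: [:: 1; 2; 3; 0; 6]; [:: 0; 2; 3; 1; 6]; [:: 0; 1; 3; 2; 6]; [:: 0; 1; 2; 3; 6]; [:: ]; [:: ]; [:: ]; [:: ]; [:: ]; [:: 6; 9; 10; 13; 11]; [:: 6; 10; 9; 11; 13]; [:: 6; 11; 9; 10; 13]; [:: 6; 12; 9; 10; 13]; [:: 6; 13; 10; 9; 11]; [:: 6; 14; 10; 9; 11]; [:: 6; 15; 16; 19; 17]; [:: 6; 16; 15; 17; 19]; [:: 6; 17; 15; 16; 19]; [:: 6; 18; 15; 16; 19]; [:: 6; 19; 16; 15; 17]; [:: 6; 20; 16; 15; 17]]; [:: [:: 0; 7; 4; 5; 6]; [:: 0; 1; 7; 4; 5]; [:: 0; 1; 2; 7; 4]; [:: 0; 1; 2; 3; 7]; [:: ]; [:: ]; [:: ]; [:: ]; [:: 4; 5; 6; 7; 8]; [:: 4; 5; 6; 7; 9]; [:: 4; 5; 6; 7; 10]; [:: 4; 5; 6; 7; 11]; [:: 4; 5; 6; 7; 12]; [:: 4; 5; 6; 7; 13]; [:: 4; 5; 6; 7; 14]; [:: 4; 5; 6; 7; 15]; [:: 4; 5; 6; 7; 16]; [:: 4; 5; 6; 7; 17]; [:: 4; 5; 6; 7; 18]; [:: 4; 5; 6; 7; 19]; [:: 4; 5; 6; 7; 20]]; [:: [:: 0; 8; 4; 5; 6]; [:: 0; 1; 8; 4; 5]; [:: 0; 1; 2;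 8; 4]; [:: 0; 1; 2; 3; 8]; [:: ]; [:: ]; [:: ]; [:: 4; 5; 6; 7; 8]; [:: ]; [:: 4; 5; 6; 8; 9]; [:: 4; 5; 6; 8; 10]; [:: 4; 5; 6; 8; 11]; [:: 4; 5; 6; 8; 12]; [:: 4; 5; 6; 8; 13]; [:: 4; 5; 6; 8; 14]; [:: 4; 5; 6; 8; 15]; [:: 4; 5; 6; 8; 16]; [:: 4; 5; 6; 8; 17]; [:: 4; 5; 6; 8; 18]; [:: 4; 5; 6; 8; 19]; [:: 4; 5; 6; 8; 20]]; [:: [:: 0; 9; 10; 13; 11]; [:: 0; 2; 3; 1; 9]; [:: 0; 1; 3; 2; 9]; [:: 0; 1; 2; 3; 9]; [:: 4; 9; 10; 13; 11]; [:: 5; 9; 10; 13; 11]; [:: 6; 9; 10; 13; 11]; [:: 4; 5; 6; 7; 9]; [:: 4; 5; 6; 8; 9]; [:: ]; [:: ]; [:: ]; [:: ]; [:: 9; 13; 10; 14; 12]; [:: 9; 14; 10; 13; 11]; [:: 9; 15; 16; 19; 17]; [:: 9; 16; 15; 17; 19]; [:: 9; 17; 15; 16; 19]; [:: 9; 18; 15; 16; 19]; [:: 9; 19; 16; 15; 17]; [:: 9; 20; 16; 15; 17]]; [:: [:: 0; 10; 9; 11; 13]; [:: 0; 2; 3; 1; 10]; [:: 0; 1; 3; 2; 10]; [:: 0; 1; 2; 3; 10]; [:: 4; 10; 9; 11; 13]; [:: 5; 10; 9; 11; 13]; [:: 6; 10; 9; 11; 13]; [:: 4; 5; 6; 7;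 10]; [:: 4; 5; 6; 8; 10]; [:: ]; [:: ]; [:: 10; 11; 9; 12; 14]; [:: 10; 12; 9; 11; 13]; [:: ]; [:: ]; [:: 10; 15; 16; 19; 17]; [:: 10; 16; 15; 17; 19]; [:: 10; 17; 15; 16; 19]; [:: 10; 18; 15; 16; 19]; [:: 10; 19; 16; 15; 17]; [:: 10; 20; 16; 15; 17]]; [:: [:: 0; 11; 9; 10; 13]; [:: 1; 11; 9; 10; 13]; [:: 2; 11; 9; 10; 13]; [:: 3; 11; 9; 10; 13]; [:: 4; 11; 9; 10; 13]; [:: 5; 11; 9; 10; 13]; [:: 6; 11; 9; 10; 13]; [:: 4; 5; 6; 7; 11]; [:: 4; 5; 6; 8; 11]; [:: ]; [:: 10; 11; 9; 12; 14]; [:: ]; [:: 10; 9; 11; 12; 14]; [:: ]; [:: 9; 10; 14; 11; 13]; [:: 11; 9; 10; 14; 12]; [:: 11; 9; 10; 14; 12]; [:: 9; 11; 17; 15; 16]; [:: 9; 11; 18; 15; 16]; [:: 9; 11; 19; 16; 15]; [:: 9; 11; 20; 16; 15]]; [:: [:: 0; 12; 9; 10; 13]; [:: 1; 12; 9; 10; 13]; [:: 2; 12; 9; 10; 13]; [:: 3; 12; 9; 10; 13]; [:: 4; 12; 9; 10; 13]; [:: 5; 12; 9; 10; 13]; [:: 6; 12; 9; 10; 13]; [:: 4; 5; 6; 7; 12]; [:: 4; 5; 6; 8; 12]; [:: ]; [:: 10; 12; 9; 11; 13]; [:: 10; 9; 11; 12; 14]; [:: ]; [:: 9; 10; 13;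 12; 14]; [:: ]; [:: 11; 13; 10; 9; 12]; [:: 11; 13; 10; 9; 12]; [:: 9; 12; 17; 15; 16]; [:: 9; 12; 18; 15; 16]; [:: 9; 12; 19; 16; 15]; [:: 9; 12; 20; 16; 15]]; [:: [:: 0; 13; 10; 9; 11]; [:: 1; 13; 10; 9; 11]; [:: 2; 13; 10; 9; 11]; [:: 3; 13; 10; 9; 11]; [:: 4; 13; 10; 9; 11]; [:: 5; 13; 10; 9; 11]; [:: 6; 13; 10; 9; 11]; [:: 4; 5; 6; 7; 13]; [:: 4; 5; 6; 8; 13]; [:: 9; 13; 10; 14; 12]; [:: ]; [:: ]; [:: 9; 10; 13; 12; 14]; [:: ]; [:: 9; 10; 13; 14; 12]; [:: 11; 9; 10; 13; 15]; [:: 11; 9; 10; 13; 16]; [:: 9; 10; 13; 17; 15]; [:: 9; 10; 13; 18; 15]; [:: 9; 10; 13; 19; 16]; [:: 9; 10; 13; 20; 16]]; [:: [:: 0; 14; 10; 9; 11]; [:: 1; 14; 10; 9; 11]; [:: 2; 14; 10; 9; 11]; [:: 3; 14; 10; 9; 11]; [:: 4; 14; 10; 9; 11]; [:: 5; 14; 10; 9; 11]; [:: 6; 14; 10; 9; 11]; [:: 4; 5; 6; 7; 14]; [:: 4; 5; 6; 8; 14]; [:: 9; 14; 10; 13; 11]; [:: ]; [:: 9; 10; 14; 11; 13]; [:: ]; [:: 9; 10; 13; 14; 12]; [:: ]; [:: 11; 9; 10; 14; 15]; [:: 11; 9; 10; 14; 16]; [:: 9; 10; 14; 17; 15]; [::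 9; 10; 14; 18; 15]; [:: 9; 10; 14; 19; 16]; [:: 9; 10; 14; 20; 16]]; [:: [:: 0; 15; 16; 19; 17]; [:: 0; 2; 3; 1; 15]; [:: 0; 1; 3; 2; 15]; [:: 0; 1; 2; 3; 15]; [:: 4; 15; 16; 19; 17]; [:: 5; 15; 16; 19; 17]; [:: 6; 15; 16; 19; 17]; [:: 4; 5; 6; 7; 15]; [:: 4; 5; 6; 8; 15]; [:: 9; 15; 16; 19; 17]; [:: 10; 15; 16; 19; 17]; [:: 11; 9; 10; 14; 12]; [:: 11; 13; 10; 9; 12]; [:: 11; 9; 10; 13; 15]; [:: 11; 9; 10; 14; 15]; [:: ]; [:: ]; [:: ]; [:: ]; [:: 15; 19; 16; 20; 18]; [:: 15; 20; 16; 19; 17]]; [:: [:: 0; 16; 15; 17; 19]; [:: 0; 2; 3; 1; 16]; [:: 0; 1; 3; 2; 16]; [:: 0; 1; 2; 3; 16]; [:: 4; 16; 15; 17; 19]; [:: 5; 16; 15; 17; 19]; [:: 6; 16; 15; 17; 19]; [:: 4; 5; 6; 7; 16]; [:: 4; 5; 6; 8; 16]; [:: 9; 16; 15; 17; 19]; [:: 10; 16; 15; 17; 19]; [:: 11; 9; 10; 14; 12]; [:: 11; 13; 10; 9; 12]; [:: 11; 9; 10; 13; 16]; [:: 11; 9; 10; 14; 16]; [:: ]; [:: ]; [:: 16; 17; 15; 18; 20]; [:: 16; 18; 15; 17; 19]; [:: ]; [:: ]]; [:: [:: 0; 17; 15; 16; 19]; [:: 1; 17; 15; 16; 19]; [::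 2; 17; 15; 16; 19]; [:: 3; 17; 15; 16; 19]; [:: 4; 17; 15; 16; 19]; [:: 5; 17; 15; 16; 19]; [:: 6; 17; 15; 16; 19]; [:: 4; 5; 6; 7; 17]; [:: 4; 5; 6; 8; 17]; [:: 9; 17; 15; 16; 19]; [:: 10; 17; 15; 16; 19]; [:: 9; 11; 17; 15; 16]; [:: 9; 12; 17; 15; 16]; [:: 9; 10; 13; 17; 15]; [:: 9; 10; 14; 17; 15]; [:: ]; [:: 16; 17; 15; 18; 20]; [:: ]; [:: 16; 15; 17; 18; 20]; [:: ]; [:: 15; 16; 20; 17; 19]]; [:: [:: 0; 18; 15; 16; 19]; [:: 1; 18; 15; 16; 19]; [:: 2; 18; 15; 16; 19]; [:: 3; 18; 15; 16; 19]; [:: 4; 18; 15; 16; 19]; [:: 5; 18; 15; 16; 19]; [:: 6; 18; 15; 16; 19]; [:: 4; 5; 6; 7; 18]; [:: 4; 5; 6; 8; 18]; [:: 9; 18; 15; 16; 19]; [:: 10; 18; 15; 16; 19]; [:: 9; 11; 18; 15; 16]; [:: 9; 12; 18; 15; 16]; [:: 9; 10; 13; 18; 15]; [:: 9; 10; 14; 18; 15]; [:: ]; [:: 16; 18; 15; 17; 19]; [:: 16; 15; 17; 18; 20]; [:: ]; [:: 15; 16; 19; 18; 20]; [:: ]]; [:: [:: 0; 19; 16; 15; 17]; [:: 1; 19; 16; 15; 17]; [:: 2; 19; 16; 15; 17]; [:: 3; 19; 16; 15; 17]; [:: 4; 19; 16; 15; 17]; [:: 5; 19; 16; 15; 17];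 [:: 6; 19; 16; 15; 17]; [:: 4; 5; 6; 7; 19]; [:: 4; 5; 6; 8; 19]; [:: 9; 19; 16; 15; 17]; [:: 10; 19; 16; 15; 17]; [:: 9; 11; 19; 16; 15]; [:: 9; 12; 19; 16; 15]; [:: 9; 10; 13; 19; 16]; [:: 9; 10; 14; 19; 16]; [:: 15; 19; 16; 20; 18]; [:: ]; [:: ]; [:: 15; 16; 19; 18; 20]; [:: ]; [:: 15; 16; 19; 20; 18]]; [:: [:: 0; 20; 16; 15; 17]; [:: 1; 20; 16; 15; 17]; [:: 2; 20; 16; 15; 17]; [:: 3; 20; 16; 15; 17]; [:: 4; 20; 16; 15; 17]; [:: 5; 20; 16; 15; 17]; [:: 6; 20; 16; 15; 17]; [:: 4; 5; 6; 7; 20]; [:: 4; 5; 6; 8; 20]; [:: 9; 20; 16; 15; 17]; [:: 10; 20; 16; 15; 17]; [:: 9; 11; 20; 16; 15]; [:: 9; 12; 20; 16; 15]; [:: 9; 10; 13; 20; 16]; [:: 9; 10; 14; 20; 16]; [:: 15; 20; 16; 19; 17]; [:: ]; [:: 15; 16; 20; 17; 19]; [:: ]; [:: 15; 16; 19; 20; 18]; [:: ]]].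
Definition W25 : seq (seq (seq nat)) := [:: [:: [:: ]; [:: ]; [:: ]; [:: ]; [:: 0; 4; 5; 6; 7]; [:: 0; 5; 4; 6; 7]; [:: 0; 6; 4; 5; 7]; [:: 0; 7; 4; 5; 6]; [:: 1; 2; 3; 0; 8]; [:: 1; 2; 3; 0; 9]; [:: 1; 2; 3; 0; 10]; [:: 0; 11; 8; 9; 10]; [:: 0; 12; 8; 9; 10]; [:: 0; 13; 14; 17; 15]; [:: 0; 14; 13; 15; 17]; [:: 0; 15; 13; 14; 17]; [:: 0; 16; 13; 14; 17]; [:: 0; 17; 14; 13; 15]; [:: 0; 18; 14; 13; 15]; [:: 0; 19; 20; 23; 21]; [:: 0; 20; 19; 21; 23]; [:: 0; 21; 19; 20; 23]; [:: 0; 22; 19; 20; 23]; [:: 0; 23; 20; 19; 21]; [:: 0; 24; 20; 19; 21]]; [:: [:: ]; [:: ]; [:: ]; [:: ]; [:: 0; 2; 3; 1; 4]; [:: 0; 2; 3; 1; 5]; [:: 0; 2; 3; 1; 6]; [:: 0; 2; 3; 1; 7]; [:: 0; 2; 3; 1; 8]; [:: 0; 2; 3; 1; 9]; [:: 0; 2; 3; 1; 10]; [:: 0; 1; 11; 8; 9]; [:: 0; 1; 12; 8; 9]; [:: 0; 2; 3; 1; 13]; [:: 0; 2; 3; 1; 14]; [:: 1; 15; 13; 14; 17]; [:: 1; 16; 13; 14; 17]; [:: 1; 17; 14; 13; 15]; [:: 1; 18; 14; 13; 15]; [:: 0; 2; 3; 1; 19]; [:: 0; 2; 3; 1; 20];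 [:: 1; 21; 19; 20; 23]; [:: 1; 22; 19; 20; 23]; [:: 1; 23; 20; 19; 21]; [:: 1; 24; 20; 19; 21]]; [:: [:: ]; [:: ]; [:: ]; [:: ]; [:: 0; 1; 3; 2; 4]; [:: 0; 1; 3; 2; 5]; [:: 0; 1; 3; 2; 6]; [:: 0; 1; 3; 2; 7]; [:: 0; 1; 3; 2; 8]; [:: 0; 1; 3; 2; 9]; [:: 0; 1; 3; 2; 10]; [:: 0; 1; 2; 11; 8]; [:: 0; 1; 2; 12; 8]; [:: 0; 1; 3; 2; 13]; [:: 0; 1; 3; 2; 14]; [:: 2; 15; 13; 14; 17]; [:: 2; 16; 13; 14; 17]; [:: 2; 17; 14; 13; 15]; [:: 2; 18; 14; 13; 15]; [:: 0; 1; 3; 2; 19]; [:: 0; 1; 3; 2; 20]; [:: 2; 21; 19; 20; 23]; [:: 2; 22; 19; 20; 23]; [:: 2; 23; 20; 19; 21]; [:: 2; 24; 20; 19; 21]]; [:: [:: ]; [:: ]; [:: ]; [:: ]; [:: 0; 1; 2; 3; 4]; [:: 0; 1; 2; 3; 5]; [:: 0; 1; 2; 3; 6]; [:: 0; 1; 2; 3; 7]; [:: 0; 1; 2; 3; 8]; [:: 0; 1; 2; 3; 9]; [:: 0; 1; 2; 3; 10]; [:: 0; 1; 2; 3; 11]; [:: 0; 1; 2; 3; 12]; [:: 0; 1; 2; 3; 13]; [:: 0; 1; 2; 3; 14]; [:: 3; 15; 13; 14; 17]; [:: 3; 16; 13; 14; 17]; [:: 3; 17; 14; 13; 15]; [::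 3; 18; 14; 13; 15]; [:: 0; 1; 2; 3; 19]; [:: 0; 1; 2; 3; 20]; [:: 3; 21; 19; 20; 23]; [:: 3; 22; 19; 20; 23]; [:: 3; 23; 20; 19; 21]; [:: 3; 24; 20; 19; 21]]; [:: [:: 0; 4; 5; 6; 7]; [:: 0; 2; 3; 1; 4]; [:: 0; 1; 3; 2; 4]; [:: 0; 1; 2; 3; 4]; [:: ]; [:: ]; [:: ]; [:: ]; [:: 5; 6; 7; 4; 8]; [:: 5; 6; 7; 4; 9]; [:: 5; 6; 7; 4; 10]; [:: 4; 11; 8; 9; 10]; [:: 4; 12; 8; 9; 10]; [:: 4; 13; 14; 17; 15]; [:: 4; 14; 13; 15; 17]; [:: 4; 15; 13; 14; 17]; [:: 4; 16; 13; 14; 17]; [:: 4; 17; 14; 13; 15]; [:: 4; 18; 14; 13; 15]; [:: 4; 19; 20; 23; 21]; [:: 4; 20; 19; 21; 23]; [:: 4; 21; 19; 20; 23]; [:: 4; 22; 19; 20; 23]; [:: 4; 23; 20; 19; 21]; [:: 4; 24; 20; 19; 21]]; [:: [:: 0; 5; 4; 6; 7]; [:: 0; 2; 3; 1; 5]; [:: 0; 1; 3; 2; 5]; [:: 0; 1; 2; 3; 5]; [:: ]; [:: ]; [:: ]; [:: ]; [:: 4; 6; 7; 5; 8]; [:: 4; 6; 7; 5; 9]; [:: 4; 6; 7; 5; 10]; [:: 4; 5; 11; 8; 9]; [:: 4; 5; 12; 8; 9]; [:: 4; 6; 7; 5; 13]; [:: 4; 6; 7; 5; 14]; [:: 5;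 15; 13; 14; 17]; [:: 5; 16; 13; 14; 17]; [:: 5; 17; 14; 13; 15]; [:: 5; 18; 14; 13; 15]; [:: 4; 6; 7; 5; 19]; [:: 4; 6; 7; 5; 20]; [:: 5; 21; 19; 20; 23]; [:: 5; 22; 19; 20; 23]; [:: 5; 23; 20; 19; 21]; [:: 5; 24; 20; 19; 21]]; [:: [:: 0; 6; 4; 5; 7]; [:: 0; 2; 3; 1; 6]; [:: 0; 1; 3; 2; 6]; [:: 0; 1; 2; 3; 6]; [:: ]; [:: ]; [:: ]; [:: ]; [:: 4; 5; 7; 6; 8]; [:: 4; 5; 7; 6; 9]; [:: 4; 5; 7; 6; 10]; [:: 4; 5; 6; 11; 8]; [:: 4; 5; 6; 12; 8]; [:: 4; 5; 7; 6; 13]; [:: 4; 5; 7; 6; 14]; [:: 6; 15; 13; 14; 17]; [:: 6; 16; 13; 14; 17]; [:: 6; 17; 14; 13; 15]; [:: 6; 18; 14; 13; 15]; [:: 4; 5; 7; 6; 19]; [:: 4; 5; 7; 6; 20]; [:: 6; 21; 19; 20; 23]; [:: 6; 22; 19; 20; 23]; [:: 6; 23; 20; 19; 21]; [:: 6; 24; 20; 19; 21]]; [:: [:: 0; 7; 4; 5; 6]; [:: 0; 2; 3; 1; 7]; [:: 0; 1; 3; 2; 7]; [:: 0; 1; 2; 3; 7]; [:: ]; [:: ]; [:: ]; [:: ]; [:: 4; 5; 6; 7; 8]; [:: 4; 5; 6; 7; 9]; [:: 4; 5; 6; 7; 10]; [:: 4; 5; 6; 7; 11]; [:: 4; 5;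 6; 7; 12]; [:: 4; 5; 6; 7; 13]; [:: 4; 5; 6; 7; 14]; [:: 7; 15; 13; 14; 17]; [:: 7; 16; 13; 14; 17]; [:: 7; 17; 14; 13; 15]; [:: 7; 18; 14; 13; 15]; [:: 4; 5; 6; 7; 19]; [:: 4; 5; 6; 7; 20]; [:: 7; 21; 19; 20; 23]; [:: 7; 22; 19; 20; 23]; [:: 7; 23; 20; 19; 21]; [:: 7; 24; 20; 19; 21]]; [:: [:: 1; 2; 3; 0; 8]; [:: 0; 2; 3; 1; 8]; [:: 0; 1; 3; 2; 8]; [:: 0; 1; 2; 3; 8]; [:: 5; 6; 7; 4; 8]; [:: 4; 6; 7; 5; 8]; [:: 4; 5; 7; 6; 8]; [:: 4; 5; 6; 7; 8]; [:: ]; [:: ]; [:: ]; [:: ]; [:: ]; [:: 8; 13; 14; 17; 15]; [:: 8; 14; 13; 15; 17]; [:: 8; 15; 13; 14; 17]; [:: 8; 16; 13; 14; 17]; [:: 8; 17; 14; 13; 15]; [:: 8; 18; 14; 13; 15]; [:: 8; 19; 20; 23; 21]; [:: 8; 20; 19; 21; 23]; [:: 8; 21; 19; 20; 23]; [:: 8; 22; 19; 20; 23]; [:: 8; 23; 20; 19; 21]; [:: 8; 24; 20; 19; 21]]; [:: [:: 1; 2; 3; 0; 9]; [:: 0; 2; 3; 1; 9]; [:: 0; 1; 3; 2; 9]; [:: 0; 1; 2; 3; 9]; [:: 5; 6; 7; 4; 9]; [:: 4; 6; 7; 5; 9]; [:: 4; 5; 7; 6; 9]; [:: 4; 5; 6;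 7; 9]; [:: ]; [:: ]; [:: ]; [:: ]; [:: ]; [:: 9; 13; 14; 17; 15]; [:: 9; 14; 13; 15; 17]; [:: 9; 15; 13; 14; 17]; [:: 9; 16; 13; 14; 17]; [:: 9; 17; 14; 13; 15]; [:: 9; 18; 14; 13; 15]; [:: 9; 19; 20; 23; 21]; [:: 9; 20; 19; 21; 23]; [:: 9; 21; 19; 20; 23]; [:: 9; 22; 19; 20; 23]; [:: 9; 23; 20; 19; 21]; [:: 9; 24; 20; 19; 21]]; [:: [:: 1; 2; 3; 0; 10]; [:: 0; 2; 3; 1; 10]; [:: 0; 1; 3; 2; 10]; [:: 0; 1; 2; 3; 10]; [:: 5; 6; 7; 4; 10]; [:: 4; 6; 7; 5; 10]; [:: 4; 5; 7; 6; 10]; [:: 4; 5; 6; 7; 10]; [:: ]; [:: ]; [:: ]; [:: ]; [:: ]; [:: 10; 13; 14; 17; 15]; [:: 10; 14; 13; 15; 17]; [:: 10; 15; 13; 14; 17]; [:: 10; 16; 13; 14; 17]; [:: 10; 17; 14; 13; 15]; [:: 10; 18; 14; 13; 15]; [:: 10; 19; 20; 23; 21]; [:: 10; 20; 19; 21; 23]; [:: 10; 21; 19; 20; 23]; [:: 10; 22; 19; 20; 23]; [:: 10; 23; 20; 19; 21]; [:: 10; 24; 20; 19; 21]]; [:: [:: 0; 11; 8; 9; 10]; [:: 0; 1; 11; 8; 9]; [:: 0; 1; 2; 11; 8]; [:: 0; 1; 2; 3; 11]; [:: 4; 11; 8; 9; 10]; [:: 4; 5; 11; 8; 9]; [:: 4;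 5; 6; 11; 8]; [:: 4; 5; 6; 7; 11]; [:: ]; [:: ]; [:: ]; [:: ]; [:: 8; 9; 10; 11; 12]; [:: 8; 9; 10; 11; 13]; [:: 8; 9; 10; 11; 14]; [:: 8; 9; 10; 11; 15]; [:: 8; 9; 10; 11; 16]; [:: 8; 9; 10; 11; 17]; [:: 8; 9; 10; 11; 18]; [:: 8; 9; 10; 11; 19]; [:: 8; 9; 10; 11; 20]; [:: 8; 9; 10; 11; 21]; [:: 8; 9; 10; 11; 22]; [:: 8; 9; 10; 11; 23]; [:: 8; 9; 10; 11; 24]]; [:: [:: 0; 12; 8; 9; 10]; [:: 0; 1; 12; 8; 9]; [:: 0; 1; 2; 12; 8]; [:: 0; 1; 2; 3; 12]; [:: 4; 12; 8; 9; 10]; [:: 4; 5; 12; 8; 9]; [:: 4; 5; 6; 12; 8]; [:: 4; 5; 6; 7; 12]; [:: ]; [:: ]; [:: ]; [:: 8; 9; 10; 11; 12]; [:: ]; [:: 8; 9; 10; 12; 13]; [:: 8; 9; 10; 12; 14]; [:: 8; 9; 10; 12; 15]; [:: 8; 9; 10; 12; 16]; [:: 8; 9; 10; 12; 17]; [:: 8; 9; 10; 12; 18]; [:: 8; 9; 10; 12; 19]; [:: 8; 9; 10; 12; 20]; [:: 8; 9; 10; 12; 21]; [:: 8; 9; 10; 12; 22]; [:: 8; 9; 10; 12; 23]; [:: 8; 9; 10; 12; 24]]; [:: [:: 0; 13; 14; 17; 15]; [:: 0; 2; 3; 1; 13]; [:: 0; 1; 3; 2; 13]; [:: 0; 1;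 2; 3; 13]; [:: 4; 13; 14; 17; 15]; [:: 4; 6; 7; 5; 13]; [:: 4; 5; 7; 6; 13]; [:: 4; 5; 6; 7; 13]; [:: 8; 13; 14; 17; 15]; [:: 9; 13; 14; 17; 15]; [:: 10; 13; 14; 17; 15]; [:: 8; 9; 10; 11; 13]; [:: 8; 9; 10; 12; 13]; [:: ]; [:: ]; [:: ]; [:: ]; [:: 13; 17; 14; 18; 16]; [:: 13; 18; 14; 17; 15]; [:: 13; 19; 20; 23; 21]; [:: 13; 20; 19; 21; 23]; [:: 13; 21; 19; 20; 23]; [:: 13; 22; 19; 20; 23]; [:: 13; 23; 20; 19; 21]; [:: 13; 24; 20; 19; 21]]; [:: [:: 0; 14; 13; 15; 17]; [:: 0; 2; 3; 1; 14]; [:: 0; 1; 3; 2; 14]; [:: 0; 1; 2; 3; 14]; [:: 4; 14; 13; 15; 17]; [:: 4; 6; 7; 5; 14]; [:: 4; 5; 7; 6; 14]; [:: 4; 5; 6; 7; 14]; [:: 8; 14; 13; 15; 17]; [:: 9; 14; 13; 15; 17]; [:: 10; 14; 13; 15; 17]; [:: 8; 9; 10; 11; 14]; [:: 8; 9; 10; 12; 14]; [:: ]; [:: ]; [:: 14; 15; 13; 16; 18]; [:: 14; 16; 13; 15; 17]; [:: ]; [:: ]; [:: 14; 19; 20; 23; 21]; [:: 14; 20; 19; 21; 23]; [:: 14; 21; 19; 20; 23]; [:: 14; 22; 19; 20; 23]; [:: 14; 23; 20; 19; 21]; [:: 14; 24; 20; 19; 21]]; [:: [:: 0; 15; 13;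 14; 17]; [:: 1; 15; 13; 14; 17]; [:: 2; 15; 13; 14; 17]; [:: 3; 15; 13; 14; 17]; [:: 4; 15; 13; 14; 17]; [:: 5; 15; 13; 14; 17]; [:: 6; 15; 13; 14; 17]; [:: 7; 15; 13; 14; 17]; [:: 8; 15; 13; 14; 17]; [:: 9; 15; 13; 14; 17]; [:: 10; 15; 13; 14; 17]; [:: 8; 9; 10; 11; 15]; [:: 8; 9; 10; 12; 15]; [:: ]; [:: 14; 15; 13; 16; 18]; [:: ]; [:: 14; 13; 15; 16; 18]; [:: ]; [:: 13; 14; 18; 15; 17]; [:: 15; 13; 14; 18; 16]; [:: 15; 13; 14; 18; 16]; [:: 13; 15; 21; 19; 20]; [:: 13; 15; 22; 19; 20]; [:: 13; 15; 23; 20; 19]; [:: 13; 15; 24; 20; 19]]; [:: [:: 0; 16; 13; 14; 17]; [:: 1; 16; 13; 14; 17]; [:: 2; 16; 13; 14; 17]; [:: 3; 16; 13; 14; 17]; [:: 4; 16; 13; 14; 17]; [:: 5; 16; 13; 14; 17]; [:: 6; 16; 13; 14; 17]; [:: 7; 16; 13; 14; 17]; [:: 8; 16; 13; 14; 17]; [:: 9; 16; 13; 14; 17]; [:: 10; 16; 13; 14; 17]; [:: 8; 9; 10; 11; 16]; [:: 8; 9; 10; 12; 16]; [:: ]; [:: 14; 16; 13; 15; 17]; [:: 14; 13; 15; 16; 18]; [:: ]; [:: 13; 14; 17; 16; 18]; [:: ]; [:: 15; 17; 14; 13; 16]; [:: 15; 17; 14; 13; 16]; [:: 13; 16; 21;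 19; 20]; [:: 13; 16; 22; 19; 20]; [:: 13; 16; 23; 20; 19]; [:: 13; 16; 24; 20; 19]]; [:: [:: 0; 17; 14; 13; 15]; [:: 1; 17; 14; 13; 15]; [:: 2; 17; 14; 13; 15]; [:: 3; 17; 14; 13; 15]; [:: 4; 17; 14; 13; 15]; [:: 5; 17; 14; 13; 15]; [:: 6; 17; 14; 13; 15]; [:: 7; 17; 14; 13; 15]; [:: 8; 17; 14; 13; 15]; [:: 9; 17; 14; 13; 15]; [:: 10; 17; 14; 13; 15]; [:: 8; 9; 10; 11; 17]; [:: 8; 9; 10; 12; 17]; [:: 13; 17; 14; 18; 16]; [:: ]; [:: ]; [:: 13; 14; 17; 16; 18]; [:: ]; [:: 13; 14; 17; 18; 16]; [:: 15; 13; 14; 17; 19]; [:: 15; 13; 14; 17; 20]; [:: 13; 14; 17; 21; 19]; [:: 13; 14; 17; 22; 19]; [:: 13; 14; 17; 23; 20]; [:: 13; 14; 17; 24; 20]]; [:: [:: 0; 18; 14; 13; 15]; [:: 1; 18; 14; 13; 15]; [:: 2; 18; 14; 13; 15]; [:: 3; 18; 14; 13; 15]; [:: 4; 18; 14; 13; 15]; [:: 5; 18; 14; 13; 15]; [:: 6; 18; 14; 13; 15]; [:: 7; 18; 14; 13; 15]; [:: 8; 18; 14; 13; 15]; [:: 9; 18; 14; 13; 15]; [:: 10; 18; 14; 13; 15]; [:: 8; 9; 10; 11; 18]; [:: 8; 9; 10; 12; 18]; [:: 13; 18; 14; 17; 15]; [:: ]; [:: 13; 14; 18; 15; 17]; [::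 ]; [:: 13; 14; 17; 18; 16]; [:: ]; [:: 15; 13; 14; 18; 19]; [:: 15; 13; 14; 18; 20]; [:: 13; 14; 18; 21; 19]; [:: 13; 14; 18; 22; 19]; [:: 13; 14; 18; 23; 20]; [:: 13; 14; 18; 24; 20]]; [:: [:: 0; 19; 20; 23; 21]; [:: 0; 2; 3; 1; 19]; [:: 0; 1; 3; 2; 19]; [:: 0; 1; 2; 3; 19]; [:: 4; 19; 20; 23; 21]; [:: 4; 6; 7; 5; 19]; [:: 4; 5; 7; 6; 19]; [:: 4; 5; 6; 7; 19]; [:: 8; 19; 20; 23; 21]; [:: 9; 19; 20; 23; 21]; [:: 10; 19; 20; 23; 21]; [:: 8; 9; 10; 11; 19]; [:: 8; 9; 10; 12; 19]; [:: 13; 19; 20; 23; 21]; [:: 14; 19; 20; 23; 21]; [:: 15; 13; 14; 18; 16]; [:: 15; 17; 14; 13; 16]; [:: 15; 13; 14; 17; 19]; [:: 15; 13; 14; 18; 19]; [:: ]; [:: ]; [:: ]; [:: ]; [:: 19; 23; 20; 24; 22]; [:: 19; 24; 20; 23; 21]]; [:: [:: 0; 20; 19; 21; 23]; [:: 0; 2; 3; 1; 20]; [:: 0; 1; 3; 2; 20]; [:: 0; 1; 2; 3; 20]; [:: 4; 20; 19; 21; 23]; [:: 4; 6; 7; 5; 20]; [:: 4; 5; 7; 6; 20]; [:: 4; 5; 6; 7; 20]; [:: 8; 20; 19; 21; 23]; [:: 9; 20; 19; 21; 23]; [:: 10; 20; 19; 21; 23]; [:: 8; 9; 10; 11; 20];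 [:: 8; 9; 10; 12; 20]; [:: 13; 20; 19; 21; 23]; [:: 14; 20; 19; 21; 23]; [:: 15; 13; 14; 18; 16]; [:: 15; 17; 14; 13; 16]; [:: 15; 13; 14; 17; 20]; [:: 15; 13; 14; 18; 20]; [:: ]; [:: ]; [:: 20; 21; 19; 22; 24]; [:: 20; 22; 19; 21; 23]; [:: ]; [:: ]]; [:: [:: 0; 21; 19; 20; 23]; [:: 1; 21; 19; 20; 23]; [:: 2; 21; 19; 20; 23]; [:: 3; 21; 19; 20; 23]; [:: 4; 21; 19; 20; 23]; [:: 5; 21; 19; 20; 23]; [:: 6; 21; 19; 20; 23]; [:: 7; 21; 19; 20; 23]; [:: 8; 21; 19; 20; 23]; [:: 9; 21; 19; 20; 23]; [:: 10; 21; 19; 20; 23]; [:: 8; 9; 10; 11; 21]; [:: 8; 9; 10; 12; 21]; [:: 13; 21; 19; 20; 23]; [:: 14; 21; 19; 20; 23]; [:: 13; 15; 21; 19; 20]; [:: 13; 16; 21; 19; 20]; [:: 13; 14; 17; 21; 19]; [:: 13; 14; 18; 21; 19]; [:: ]; [:: 20; 21; 19; 22; 24]; [:: ]; [:: 20; 19; 21; 22; 24]; [:: ]; [:: 19; 20; 24; 21; 23]]; [:: [:: 0; 22; 19; 20; 23]; [:: 1; 22; 19; 20; 23]; [:: 2; 22; 19; 20; 23]; [:: 3; 22; 19; 20; 23]; [:: 4; 22; 19; 20; 23]; [:: 5; 22; 19; 20; 23]; [:: 6; 22; 19; 20; 23]; [:: 7; 22; 19; 20; 23]; [:: 8; 22;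 19; 20; 23]; [:: 9; 22; 19; 20; 23]; [:: 10; 22; 19; 20; 23]; [:: 8; 9; 10; 11; 22]; [:: 8; 9; 10; 12; 22]; [:: 13; 22; 19; 20; 23]; [:: 14; 22; 19; 20; 23]; [:: 13; 15; 22; 19; 20]; [:: 13; 16; 22; 19; 20]; [:: 13; 14; 17; 22; 19]; [:: 13; 14; 18; 22; 19]; [:: ]; [:: 20; 22; 19; 21; 23]; [:: 20; 19; 21; 22; 24]; [:: ]; [:: 19; 20; 23; 22; 24]; [:: ]]; [:: [:: 0; 23; 20; 19; 21]; [:: 1; 23; 20; 19; 21]; [:: 2; 23; 20; 19; 21]; [:: 3; 23; 20; 19; 21]; [:: 4; 23; 20; 19; 21]; [:: 5; 23; 20; 19; 21]; [:: 6; 23; 20; 19; 21]; [:: 7; 23; 20; 19; 21]; [:: 8; 23; 20; 19; 21]; [:: 9; 23; 20; 19; 21]; [:: 10; 23; 20; 19; 21]; [:: 8; 9; 10; 11; 23]; [:: 8; 9; 10; 12; 23]; [:: 13; 23; 20; 19; 21]; [:: 14; 23; 20; 19; 21]; [:: 13; 15; 23; 20; 19]; [:: 13; 16; 23; 20; 19]; [:: 13; 14; 17; 23; 20]; [:: 13; 14; 18; 23; 20]; [:: 19; 23; 20; 24; 22]; [:: ]; [:: ]; [:: 19; 20; 23; 22; 24]; [:: ]; [:: 19; 20; 23; 24; 22]]; [:: [:: 0; 24; 20; 19; 21]; [:: 1; 24; 20; 19; 21]; [:: 2; 24; 20; 19; 21]; [:: 3; 24; 20; 19; 21]; [:: 4;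 24; 20; 19; 21]; [:: 5; 24; 20; 19; 21]; [:: 6; 24; 20; 19; 21]; [:: 7; 24; 20; 19; 21]; [:: 8; 24; 20; 19; 21]; [:: 9; 24; 20; 19; 21]; [:: 10; 24; 20; 19; 21]; [:: 8; 9; 10; 11; 24]; [:: 8; 9; 10; 12; 24]; [:: 13; 24; 20; 19; 21]; [:: 14; 24; 20; 19; 21]; [:: 13; 15; 24; 20; 19]; [:: 13; 16; 24; 20; 19]; [:: 13; 14; 17; 24; 20]; [:: 13; 14; 18; 24; 20]; [:: 19; 24; 20; 23; 21]; [:: ]; [:: 19; 20; 24; 21; 23]; [:: ]; [:: 19; 20; 23; 24; 22]; [:: ]]].

Lemma good8 : PP1 (G 8) /\ PP2 (G 8).
Proof. by apply: (good_of (W := W8)); vm_compute. Qed.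
Lemma good9 : PP1 (G 9) /\ PP2 (G 9).
Proof. by apply: (good_of (W := W9)); vm_compute. Qed.
Lemma good10 : PP1 (G 10) /\ PP2 (G 10).
Proof. by apply: (good_of (W := W10)); vm_compute. Qed.
Lemma good11 : PP1 (G 11) /\ PP2 (G 11).
Proof. by apply: (good_of (W := W11)); vm_compute. Qed.
Lemma good12 : PP1 (G 12) /\ PP2 (G 12).
Proof. by apply: (good_of (W := W12)); vm_compute. Qed.
Lemma good13 : PP1 (G 13) /\ PP2 (G 13).
Proof. by apply: (good_of (W := W13)); vm_compute. Qed.
Lemma good14 : PP1 (G 14) /\ PP2 (G 14).
Proof. by apply: (good_of (W := W14)); vm_compute. Qed.
Lemma good15 : PP1 (G 15) /\ PP2 (G 15).
Proof. by apply: (good_of (W := W15)); vm_compute. Qed.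
Lemma good16 : PP1 (G 16) /\ PP2 (G 16).
Proof. by apply: (good_of (W := W16)); vm_compute. Qed.
Lemma good17 : PP1 (G 17) /\ PP2 (G 17).
Proof. by apply: (good_of (W := W17)); vm_compute. Qed.
Lemma good19 : PP1 (G 19) /\ PP2 (G 19).
Proof. by apply: (good_of (W := W19)); vm_compute. Qed.
Lemma good20 : PP1 (G 20) /\ PP2 (G 20).
Proof. by apply: (good_of (W := W20)); vm_compute. Qed.
Lemma good21 : PP1 (G 21) /\ PP2 (G 21).
Proof. by apply: (good_of (W := W21)); vm_compute. Qed.
Lemma good25 : PP1 (G 25) /\ PP2 (G 25).
Proof. by apply: (good_of (W := W25)); vm_compute. Qed.

Lemma xadj_sym r i j : xadj r i j = xadj r j i.
Proof.
rewrite /xadj (eq_sym i) (eq_sym (xcomp r i)).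
by case: (i == er r - 2) (i == er r - 1) (j == er r - 2) (j == er r - 1) => [] [] [] [].
Qed.
Lemma hadj_sym i j : hadj i j = hadj j i.
Proof. by rewrite /hadj eq_sym orbC. Qed.
Lemma gadjr_sym r a b : gadjr r a b = gadjr r b a.
Proof.
rewrite /gadjr eq_sym; case E: (blk r b == blk r a) => //=.
by rewrite (eqP E) xadj_sym hadj_sym.
Qed.
Lemma gadjr_irr r a : gadjr r a a = false.
Proof. by rewrite /gadjr eqxx /xadj /hadj eqxx /=; case: ifP. Qed.

Lemma G_simple n : simple_graph (G n).
Proof. split; move=> a *; [exact: gadjr_sym | exact: gadjr_irr]. Qed.

Definition Scnt r N := \sum_(0 <= a < N) \sum_(0 <= b < N) ((a < b) && gadjr r a b).

Lemma Gr_simple n r : simple_graph (Gf n (gadjr r)).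
Proof. split; move=> a *; [exact: gadjr_sym | exact: gadjr_irr]. Qed.

Lemma edges_le n r : #|edges (Gf n (gadjr r))| <= Scnt r n.
Proof.
set g := Gf n (gadjr r).
pose A' := [set p : 'I_n * 'I_n | (p.1 < p.2) && g p.1 p.2].
have -> : Scnt r n = #|A'|.
  have -> : Scnt r n = \sum_(a < n) \sum_(b < n) (if (a,b) \in A' then 1 else 0).
    rewrite /Scnt big_mkord; apply: eq_bigr => a _; rewrite big_mkord; apply: eq_bigr => b _.
    by rewrite inE /=; case: (_ && _).
  rewrite pair_bigA -sum1_card [RHS]big_mkcond /=.
  by apply: eq_bigr => [[a b]].
apply: (leq_trans _ (leq_imset_card (fun p : 'I_n * 'I_n => [set p.1; p.2]) A')).
apply: subset_leq_card; apply/subsetP => X /imsetP [p]; rewrite inE => Hp ->.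
case: (ltngtP p.1 p.2) => H.
- by apply/imsetP; exists p => //; rewrite inE H.
- apply/imsetP; exists (p.2, p.1); first by rewrite inE /= H /g (Gr_simple n r).1.
  by rewrite setUC.
- by move: Hp; rewrite /g (val_inj H) (Gr_simple n r).2.
Qed.

Lemma blk_new r m i : i < 6 -> blk r (i + (er r + 6 * m)) = m.+1.
Proof. move=> Hi; rewrite /blk; case: ifP => H; lia. Qed.
Lemma loc_new r m i : i < 6 -> loc r (i + (er r + 6 * m)) = i.
Proof. move=> Hi; rewrite /loc; case: ifP => H; lia. Qed.
Lemma blk_le r m a : a < er r + 6 * m -> blk r a <= m.
Proof. move=> Ha; rewrite /blk; case: ifP => H; lia. Qed.

Lemma Scnt_step r m : Scnt r (er r + 6 * m + 6) = Scnt r (er r + 6 * m) + 7.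
Proof.
set N := er r + 6 * m.
have HN : N <= N + 6 by rewrite leq_addr.
rewrite /Scnt (big_cat_nat (leq0n N) HN) /=.
rewrite (eq_big_nat _ _ (F2 := fun a => \sum_(0 <= b < N) ((a < b) && gadjr r a b)
   + \sum_(N <= b < N + 6) ((a < b) && gadjr r a b))); last first.
  by move=> a _; rewrite (big_cat_nat (leq0n N) HN).
rewrite big_split /=.
have -> : \sum_(0 <= a < N) \sum_(N <= b < N + 6) ((a < b) && gadjr r a b) = 0.
  apply: big1_seq => a /andP [_]; rewrite mem_index_iota => Ha.
  apply: big1_seq => b /andP [_]; rewrite mem_index_iota => Hb.
  have Hbb : blk r b = m.+1.
    by rewrite -(subnK (proj1 (andP Hb))) blk_new //; lia.
  have Hab : blk r a <= m by apply: blk_le; lia.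
  have E : (blk r a == m.+1) = false by apply/eqP; lia.
  by rewrite /gadjr Hbb E andbF.
rewrite addn0; congr (_ + _).
rewrite (eq_big_nat _ _ (F2 := fun a => \sum_(N <= b < N + 6) ((a < b) && gadjr r a b))); last first.
  move=> a /andP [Ha _]; rewrite (big_cat_nat (leq0n N) HN) /= (_ : \sum_(0 <= b < N) _ = 0) ?add0n //.
  apply: big1_seq => b /andP [_]; rewrite mem_index_iota => Hb.
  by rewrite ltnNge (leq_trans (ltnW (proj2 (andP Hb))) Ha).
rewrite -{1}(add0n N) big_addn addKn.
rewrite (eq_big_nat _ _ (F2 := fun i => \sum_(0 <= j < 6) ((i < j) && hadj i j))); last first.
  move=> i /andP [_ Hi]; rewrite -{1}(add0n N) big_addn addKn.
  apply: eq_big_nat => j /andP [_ Hj].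
  by rewrite ltn_add2r /gadjr !blk_new // !loc_new // eqxx.
by rewrite unlock.
Qed.

Definition Er r := nth 0 [:: 0; 21; 12; 15; 6; 9] r.

Lemma Scnt_val r m : r < 6 -> Scnt r (er r + 6 * m) = Er r + 7 * m.
Proof.
move=> Hr; elim: m => [|m IH].
  rewrite muln0 addn0.
  by case: r Hr => [|[|[|[|[|[|r]]]]]] // _; rewrite /Scnt unlock.
have -> : er r + 6 * m.+1 = er r + 6 * m + 6 by lia.
by rewrite Scnt_step IH; lia.
Qed.

Ltac split_ifs := repeat match goal with
 | |- context [if ?c then _ else _] =>
   lazymatch c with context [if _ then _ else _] => fail | _ =>
     let H := fresh "H" in destruct c eqn:H end
 end.

Section Emb2.
Variables r m k1 k2 : nat.
Hypotheses (Hk1 : k1 < m) (Hk2 : k2 < m) (Hk : k1 != k2).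

Definition phin a := if a < er r then a else if a < er r + 6 then er r + 6 * k1 + (a - er r)
  else er r + 6 * k2 + (a - er r - 6).

Lemma phin_lt a : a < er r + 12 -> phin a < er r + 6 * m.
Proof. rewrite /phin => Ha; split_ifs; lia. Qed.

Lemma blk_phi a : a < er r + 12 -> blk r (phin a) =
  if blk r a == 0 then 0 else if blk r a == 1 then k1.+1 else k2.+1.
Proof. rewrite /phin /blk => Ha; split_ifs; lia. Qed.

Lemma loc_phi a : a < er r + 12 -> loc r (phin a) = loc r a.
Proof. rewrite /phin /loc => Ha; split_ifs; lia. Qed.

Lemma phin_inj a b : a < er r + 12 -> b < er r + 12 -> phin a = phin b -> a = b.
Proof. move/eqP: Hk => Hk' Ha Hb; rewrite /phin; split_ifs; lia. Qed.

Lemma gadj_phi a b : a < er r + 12 -> b < er r + 12 ->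
  gadjr r (phin a) (phin b) = gadjr r a b.
Proof.
move=> Ha Hb; rewrite /gadjr !blk_phi // !loc_phi //.
have : blk r a <= 2 by apply: (@blk_le r 2).
have : blk r b <= 2 by apply: (@blk_le r 2).
move/negbTE: Hk => Hk'.
case: (blk r a) => [|[|[|?]]]; case: (blk r b) => [|[|[|?]]] //= _ _;
  by rewrite ?eqSS ?eqxx ?Hk' ?(eq_sym k2) ?Hk'.
Qed.

Lemma phin_cl a v : a < er r + 12 -> gadjr r (phin a) v ->
  exists2 b, b < er r + 12 & v = phin b.
Proof.
move=> Ha /andP [/eqP Hb _]; rewrite blk_phi // in Hb.
move/eqP: Hk => Hk'.
exists (if v < er r then v else if (v - er r) %/ 6 == k1 then er r + (v - er r) %% 6
        else er r + 6 + (v - er r) %% 6);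
  move: Hb; rewrite /phin /blk; split_ifs; lia.
Qed.

Definition phi (a : 'I_(er r + 12)) : 'I_(er r + 6 * m) := Ordinal (phin_lt (ltn_ord a)).

Lemma phi_inj : injective phi.
Proof. by move=> a b /(congr1 val) /= /phin_inj H; apply: val_inj; apply: H. Qed.

Lemma phi_adj a b : Gf _ (gadjr r) (phi a) (phi b) = Gf _ (gadjr r) a b.
Proof. exact: gadj_phi. Qed.

Lemma phi_cl a v : Gf _ (gadjr r) (phi a) v -> exists b, v = phi b.
Proof.
move=> /(phin_cl (ltn_ord a)) [b Hb Hv]; exists (Ordinal Hb); exact: val_inj.
Qed.

Lemma emb_PP1 : PP1 (Gf (er r + 12) (gadjr r)) -> forall a0 s,
  dm_path (Gf (er r + 6 * m) (gadjr r)) (phi a0 :: s) -> size (phi a0 :: s) <= 4.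
Proof.
move=> H a0 s Hd; have := Hd => /and3P [_ Hp _].
have [s0 Hs0] := emb_path phi_cl Hp; subst s.
have : dm_path (Gf (er r + 6 * m) (gadjr r)) (map phi (a0 :: s0)) by [].
rewrite (emb_dm phi_inj phi_adj phi_cl) => Hd0; move: (H _ Hd0); by rewrite /= size_map.
Qed.

Lemma emb_PP2 : PP2 (Gf (er r + 12) (gadjr r)) -> forall a0 b0,
  phi a0 != phi b0 -> ~~ Gf (er r + 6 * m) (gadjr r) (phi a0) (phi b0) ->
  exists s, dm_path (add_edge (Gf (er r + 6 * m) (gadjr r)) (phi a0) (phi b0)) s /\ 5 <= size s.
Proof.
move=> H a0 b0 Hne Hg.
have Hne0 : a0 != b0 by apply: contra Hne => /eqP ->.
rewrite phi_adj in Hg.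
have [s0 [Hd Hs]] := H a0 b0 Hne0 Hg.
exists (map phi s0); rewrite size_map; split=> //.
by rewrite (emb_dm phi_inj (emb_add phi_inj phi_adj a0 b0) (@emb_add_cl _ _ _ _ phi_cl a0 b0)).
Qed.
End Emb2.


Lemma other j m : 2 <= m -> exists2 o, o < m & o != j.
Proof.
move=> Hm; case: (posnP j) => Hj.
  by exists 1 => //; lia.
by exists 0 => //; lia.
Qed.

Lemma cover2 r m x y : 2 <= m -> x < er r + 6 * m -> y < er r + 6 * m ->
  exists k1 k2 a b, [/\ k1 < m, k2 < m & k1 != k2] /\ [/\ a < er r + 12,
    b < er r + 12, x = phin r k1 k2 a & y = phin r k1 k2 b].
Proof.
move=> Hm Hx Hy.
case: (ltnP x (er r)) => Hxe; case: (ltnP y (er r)) => Hye.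
- exists 0, 1, x, y; (do 2 split) => //; try rewrite /phin; split_ifs; lia.
- have Hj : (y - er r) %/ 6 < m by lia.
  have [o Ho /eqP Hoj] := other ((y - er r) %/ 6) Hm.
  exists ((y - er r) %/ 6), o, x, (er r + (y - er r) %% 6);
    (do 2 split) => //; try rewrite /phin; split_ifs; lia.
- have Hj : (x - er r) %/ 6 < m by lia.
  have [o Ho /eqP Hoj] := other ((x - er r) %/ 6) Hm.
  exists ((x - er r) %/ 6), o, (er r + (x - er r) %% 6), y;
    (do 2 split) => //; try rewrite /phin; split_ifs; lia.
- have Hj : (x - er r) %/ 6 < m by lia.
  have Hj' : (y - er r) %/ 6 < m by lia.
  case: (eqVneq ((x - er r) %/ 6) ((y - er r) %/ 6)) => Hxy.
    have [o Ho /eqP Hoj] := other ((x - er r) %/ 6) Hm.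
    exists ((x - er r) %/ 6), o, (er r + (x - er r) %% 6), (er r + (y - er r) %% 6);
      (do 2 split) => //; try rewrite /phin; split_ifs; lia.
  move/eqP: Hxy => Hxy.
  exists ((x - er r) %/ 6), ((y - er r) %/ 6), (er r + (x - er r) %% 6),
    (er r + 6 + (y - er r) %% 6);
    (do 2 split) => //; try rewrite /phin; split_ifs; lia.
Qed.

Lemma base r : r < 6 -> PP1 (Gf (er r + 12) (gadjr r)) /\ PP2 (Gf (er r + 12) (gadjr r)).
Proof.
case: r => [|[|[|[|[|[|r]]]]]] // _; [exact: good12|exact: good25|exact: good20|
  exact: good21|exact: good16|exact: good17].
Qed.

Lemma small r m : r < 6 -> m <= 1 -> 8 <= er r + 6 * m ->
  PP1 (Gf (er r + 6 * m) (gadjr r)) /\ PP2 (Gf (er r + 6 * m) (gadjr r)).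
Proof.
move=> Hr Hm Hn.
case: m Hm Hn => [|[|m]] // _; case: r Hr => [|[|[|[|[|[|r]]]]]] Hr Hn;
 first [exact: good8 | exact: good9 | exact: good10 | exact: good11 | exact: good13
  | exact: good14 | exact: good15 | exact: good19 | by move: Hn | by move: Hr].
Qed.

Lemma big_case r m : r < 6 -> 2 <= m ->
  PP1 (Gf (er r + 6 * m) (gadjr r)) /\ PP2 (Gf (er r + 6 * m) (gadjr r)).
Proof.
move=> Hr Hm; have [B1 B2] := base Hr; split.
  move=> [|v s] Hd //.
  have [k1 [k2 [a [b [[Hk1 Hk2 Hk] [Ha Hb Hv _]]]]]] := @cover2 r m _ _ Hm (ltn_ord v) (ltn_ord v).
  have Ev : v = phi Hk1 Hk2 Hk (Ordinal Ha) by apply: val_inj.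
  rewrite Ev in Hd *; exact: emb_PP1 B1 _ _ Hd.
move=> x y Hxy Hg.
have [k1 [k2 [a [b [[Hk1 Hk2 Hk] [Ha Hb Hx Hy]]]]]] := @cover2 r m _ _ Hm (ltn_ord x) (ltn_ord y).
have Ex : x = phi Hk1 Hk2 Hk (Ordinal Ha) by apply: val_inj.
have Ey : y = phi Hk1 Hk2 Hk (Ordinal Hb) by apply: val_inj.
rewrite Ex Ey in Hxy Hg *.
exact: emb_PP2 B2 _ _ Hxy Hg.
Qed.

Lemma main_gen r m : r < 6 -> 8 <= er r + 6 * m ->
  exists g : rel 'I_(er r + 6 * m),
    simple_graph g /\ saturated 5 g /\
    6 * #|edges g| <= 7 * (er r + 6 * m) + c_const r.
Proof.
move=> Hr Hn; exists (Gf _ (gadjr r)); split; first exact: Gr_simple.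
split.
  have [H1 H2] : PP1 (Gf (er r + 6 * m) (gadjr r)) /\ PP2 (Gf (er r + 6 * m) (gadjr r)).
    case: (leqP m 1) => Hm; [exact: small | exact: big_case].
  exact: sat_of.
apply: leq_trans (leq_mul (leqnn 6) (edges_le _ _)) _.
rewrite Scnt_val //.
by case: r Hr {Hn} => [|[|[|[|[|[|r]]]]]] // _; rewrite /Er /er /c_const /=; lia.
Qed.

Lemma decomp n : 8 <= n -> exists m, n = er (n %% 6) + 6 * m.
Proof.
move=> Hn; have Hd := divn_eq n 6; have Hr := ltn_pmod n (isT : 0 < 6).
move: (n %/ 6) (n %% 6) Hd Hr => q r Hd Hr.
case: r Hr Hd => [|[|[|[|[|[|r]]]]]] // _ Hd; rewrite /er /=;
  [exists q | exists (q - 2) | exists (q - 1) | exists (q - 1) | exists q | exists q]; lia.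
Qed.

Theorem proposition2p8 (n : nat) : 8 <= n ->
  exists g : rel 'I_n,
    simple_graph g /\ saturated 5 g /\
    6 * #|edges g| <= 7 * n + c_const (n %% 6).
Proof.
move=> Hn; have [m Hm] := decomp Hn.
move: Hm (ltn_pmod n (isT : 0 < 6)); move: (n %% 6) => r Hm Hr.
subst n; exact: main_gen.
Qed.
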